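(* Let $\mu:[0,1)\to(0,\infty)$ be decreasing and continuous with $\lim_{r\to1^-}\mu(r)=0$, and suppose there is $B>0$ such that $\mu(1-d/2)\ge B\,\mu(1-d)$ for all $d\in(0,1]$. Let $u(z)=\operatorname{Re}\sum_k a_{n_k}z^{n_k}$ be a Hadamard gap series ($n_k$ positive integers, $n_{k+1}\ge\lambda n_k$, $\lambda>1$) converging in $\mathbb{D}$. Then $u\in\mathcal{B}_\mu$ if and only if there is $C$ such that $\sum_{n_k\le N}n_k|a_{n_k}|\le \dfrac{C}{\mu(1-1/N)}$ for all $N\in\mathbb{N}$.
   Context: The Bloch-type space $\mathcal{B}_\mu$ is the set of harmonic functions $u$ on the unit disk $\mathbb{D}$ with $\|u\|_{\mathcal{B}_\mu}=\sup_{z\in\mathbb{D}}\big(|u(0)|+\mu(|z|)\,|\nabla u(z)|\big)<\infty$. *)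

(* Defs.v *)
From Stdlib Require Import Reals.
Open Scope R_scope.

(* (x + i y)^n as a pair (real part, imaginary part) *)
Fixpoint cpow (x y : R) (n : nat) : R * R :=
  match n with
  | O => (1, 0)
  | S m => let (p, q) := cpow x y m in (p * x - q * y, p * y + q * x)
  end.

(* real and imaginary parts of (ar + i ai) * (x + i y)^n *)
Definition re_term (ar ai x y : R) (n : nat) : R :=
  ar * fst (cpow x y n) - ai * snd (cpow x y n).
Definition im_term (ar ai x y : R) (n : nat) : R :=
  ar * snd (cpow x y n) + ai * fst (cpow x y n).

Definition in_Bloch_mu (mu : R -> R) (u : R -> R -> R) : Prop :=
  exists M : R, forall x y : R, x * x + y * y < 1 ->
    exists ux uy : R,
      derivable_pt_lim (fun t => u t y) x ux /\
      derivable_pt_lim (fun t => u x t) y uy /\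
      Rabs (u 0 0) + mu (sqrt (x * x + y * y)) * sqrt (ux * ux + uy * uy) <= M.

(* Main.v *)
Require Import Defs.
From Stdlib Require Import Reals Ranalysis5 Lra Lia Psatz ClassicalEpsilon ZArith.
Open Scope R_scope.

Lemma sum_tele (g : nat -> R) (n : nat) :
  sum_f_R0 (fun j => g (S j) - g j) n = g (S n) - g O.
Proof. induction n; simpl; [ring| rewrite IHn; ring]. Qed.

Lemma cv_const (c : R) : Un_cv (fun _ => c) c.
Proof. intros eps He; exists O; intros; unfold Rdist; rewrite Rminus_diag, Rabs_R0; lra. Qed.

Lemma le_lim_ev (u v : nat -> R) (a b : R) (K : nat) :
  (forall p, (K <= p)%nat -> u p <= v p) -> Un_cv u a -> Un_cv v b -> a <= b.
Proof.
  intros H Hu Hv. destruct (Rle_dec a b) as [|Hn]; [auto|].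
  exfalso. assert (e : (a - b)/2 > 0) by lra.
  destruct (Hu _ e) as [N1 H1]. destruct (Hv _ e) as [N2 H2].
  specialize (H1 (K + N1 + N2)%nat ltac:(lia)). specialize (H2 (K + N1 + N2)%nat ltac:(lia)).
  specialize (H (K + N1 + N2)%nat ltac:(lia)).
  unfold Rdist in *. apply Rabs_def2 in H1. apply Rabs_def2 in H2. lra.
Qed.

Lemma sum_diff_bound (F D : nat -> R) (K p : nat) :
  (forall k, Rabs (F k) <= D k) -> (K <= p)%nat ->
  Rabs (sum_f_R0 F p - sum_f_R0 F K) <= sum_f_R0 D p - sum_f_R0 D K.
Proof.
  intros HD Hp. induction Hp.
  - rewrite !Rminus_diag, Rabs_R0. lra.
  - simpl. specialize (HD (S m)).
    replace (sum_f_R0 F m + F (S m) - sum_f_R0 F K) with ((sum_f_R0 F m - sum_f_R0 F K) + F (S m)) by ring.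
    eapply Rle_trans; [apply Rabs_triang|]. lra.
Qed.

Lemma tail_bound (F D : nat -> R) (e l : R) (K : nat) :
  (forall k, Rabs (F k) <= D k) ->
  Un_cv (fun N => sum_f_R0 F N) e -> Un_cv (fun N => sum_f_R0 D N) l ->
  Rabs (e - sum_f_R0 F K) <= l - sum_f_R0 D K.
Proof.
  intros HD He Hl.
  apply (le_lim_ev (fun p => Rabs (sum_f_R0 F p - sum_f_R0 F K))
           (fun p => sum_f_R0 D p - sum_f_R0 D K) _ _ K).
  - intros; apply sum_diff_bound; auto.
  - apply cv_cvabs. apply CV_minus; [exact He| apply cv_const].
  - apply CV_minus; [exact Hl| apply cv_const].
Qed.

Lemma dom_cv (F D : nat -> R) (l : R) :
  (forall k, Rabs (F k) <= D k) -> Un_cv (fun N => sum_f_R0 D N) l ->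
  exists e, Un_cv (fun N => sum_f_R0 F N) e.
Proof.
  intros HD Hl.
  assert (HC : Cauchy_crit (fun N => sum_f_R0 D N)) by (apply CV_Cauchy; exists l; exact Hl).
  assert (HC' : Cauchy_crit (fun N => sum_f_R0 F N)).
  { intros eps Heps. destruct (HC eps Heps) as [N HN]. exists N. intros p m Hp Hm.
    specialize (HN p m Hp Hm). unfold Rdist in *. apply Rabs_def2 in HN.
    destruct (Nat.le_ge_cases m p) as [Hmp | Hmp].
    - eapply Rle_lt_trans; [apply sum_diff_bound; eauto|]. lra.
    - rewrite Rabs_minus_sym. eapply Rle_lt_trans; [apply sum_diff_bound; eauto|]. lra. }
  destruct (R_complete _ HC') as [e He]; exists e; exact He.
Qed.

Definition slim (s : nat -> R) : R :=
  epsilon (inhabits 0) (fun l => Un_cv (fun N => sum_f_R0 s N) l).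

Lemma slim_spec s : (exists l, Un_cv (fun N => sum_f_R0 s N) l) ->
  Un_cv (fun N => sum_f_R0 s N) (slim s).
Proof. intros H; unfold slim; apply epsilon_spec; exact H. Qed.

Lemma deriv_ext f g x l : (forall t, f t = g t) -> derivable_pt_lim f x l -> derivable_pt_lim g x l.
Proof. intros H Hf eps He. destruct (Hf eps He) as [d Hd]. exists d. intros h Hh Hh'. rewrite <- !H. apply Hd; auto. Qed.

Lemma psum_deriv (F F' : nat -> R -> R) (t : R) (N : nat) :
  (forall k, derivable_pt_lim (F k) t (F' k t)) ->
  derivable_pt_lim (fun s => sum_f_R0 (fun k => F k s) N) t (sum_f_R0 (fun k => F' k t) N).
Proof.
  intros H. induction N; simpl.
  - apply H.
  - apply (derivable_pt_lim_plus (fun s => sum_f_R0 (fun k => F k s) N) (F (S N))); auto.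
Qed.

Lemma series_deriv (F F' : nat -> R -> R) (D : nat -> R) (f : R -> R) (x d lD : R) :
  0 < d ->
  (forall k t, Rabs (t - x) < d -> derivable_pt_lim (F k) t (F' k t)) ->
  (forall k t, Rabs (t - x) < d -> continuity_pt (F' k) t) ->
  (forall k t, Rabs (t - x) < d -> Rabs (F' k t) <= D k) ->
  Un_cv (fun N => sum_f_R0 D N) lD ->
  (forall t, Rabs (t - x) < d -> Un_cv (fun N => sum_f_R0 (fun k => F k t) N) (f t)) ->
  derivable_pt_lim f x (slim (fun k => F' k x)).
Proof.
  intros Hd HF' HFc HB HlD Hf.
  set (r := mkposreal d Hd).
  set (g := fun t => slim (fun k => F' k t)).
  assert (Hg : forall t, Rabs (t - x) < d -> Un_cv (fun N => sum_f_R0 (fun k => F' k t) N) (g t)).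
  { intros t Ht. apply slim_spec. eapply dom_cv; [|exact HlD]. intro k; apply HB; auto. }
  assert (HCVU : CVU (fun N t => sum_f_R0 (fun k => F' k t) N) g x r).
  { intros eps Heps. destruct (HlD eps Heps) as [N HN]. exists N. intros m t Hm Ht.
    unfold Boule in Ht; simpl in Ht.
    eapply Rle_lt_trans.
    - apply (tail_bound (fun k => F' k t) D (g t) lD m); auto.
    - specialize (HN m Hm). unfold Rdist in HN. apply Rabs_def2 in HN. lra. }
  change (slim (fun k => F' k x)) with (g x).
  apply (derivable_pt_lim_CVU (fun N t => sum_f_R0 (fun k => F k t) N)
           (fun N t => sum_f_R0 (fun k => F' k t) N) f g x x r).
  - unfold Boule; simpl. rewrite Rminus_diag, Rabs_R0; auto.
  - intros t N Ht. unfold Boule in Ht. simpl in Ht.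
    apply psum_deriv. intro k; apply HF'; auto.
  - intros t Ht; apply Hf; auto.
  - exact HCVU.
  - intros t Ht. apply (CVU_continuity _ _ _ _ HCVU); auto.
    intros N t' Ht'. unfold Boule in Ht'; simpl in Ht'.
    induction N; simpl.
    + apply HFc; auto.
    + apply (continuity_pt_plus (fun s => sum_f_R0 (fun k => F' k s) N) (F' (S N))); auto.
Qed.

Lemma cpow_S x y n : cpow x y (S n) =
  (fst (cpow x y n) * x - snd (cpow x y n) * y, fst (cpow x y n) * y + snd (cpow x y n) * x).
Proof. simpl. destruct (cpow x y n); reflexivity. Qed.

Lemma cpow_norm x y n : fst (cpow x y n) ^ 2 + snd (cpow x y n) ^ 2 = (x*x+y*y)^n.
Proof.
  induction n. simpl; ring.
  rewrite cpow_S; cbn [fst snd].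
  change ((x*x+y*y)^(S n)) with ((x*x+y*y) * (x*x+y*y)^n). rewrite <- IHn. ring.
Qed.

Lemma cpow_polar r th n :
  cpow (r*cos th) (r*sin th) n = (r^n * cos (INR n * th), r^n * sin (INR n * th)).
Proof.
  induction n.
  - simpl. rewrite Rmult_0_l, cos_0, sin_0. f_equal; ring.
  - rewrite cpow_S, IHn; cbn [fst snd]. rewrite S_INR.
    replace ((INR n + 1) * th) with (INR n * th + th) by ring.
    rewrite cos_plus, sin_plus. simpl pow. f_equal; ring.
Qed.

Lemma cpow_real x n : cpow x 0 n = (x^n, 0).
Proof. induction n. reflexivity. rewrite cpow_S, IHn; cbn [fst snd]. simpl pow. f_equal; ring. Qed.

Lemma dlim_eq f x l l' : derivable_pt_lim f x l -> l = l' -> derivable_pt_lim f x l'.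
Proof. intros H ->; exact H. Qed.

Lemma cpow_dx y x n :
  derivable_pt_lim (fun t => fst (cpow t y n)) x (INR n * fst (cpow x y (pred n))) /\
  derivable_pt_lim (fun t => snd (cpow t y n)) x (INR n * snd (cpow x y (pred n))).
Proof.
  induction n as [|n [IH1 IH2]].
  - simpl. split; (apply dlim_eq with 0; [apply derivable_pt_lim_const| ring]).
  - assert (E : INR n * fst (cpow x y (pred n)) * x - INR n * snd (cpow x y (pred n)) * y
                  = INR n * fst (cpow x y n)
             /\ INR n * fst (cpow x y (pred n)) * y + INR n * snd (cpow x y (pred n)) * x
                  = INR n * snd (cpow x y n)).
    { destruct n. simpl; split; ring. simpl pred. rewrite cpow_S. cbn [fst snd]. split; ring. }
    destruct E as [E1 E2]. simpl pred. rewrite S_INR.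
    split.
    + apply deriv_ext with (fun t => fst (cpow t y n) * t - snd (cpow t y n) * y).
      { intro t; rewrite cpow_S; reflexivity. }
      eapply dlim_eq.
      * apply (derivable_pt_lim_minus (fun t => fst (cpow t y n) * t) (fun t => snd (cpow t y n) * y)).
        -- apply (derivable_pt_lim_mult (fun t => fst (cpow t y n)) id); [exact IH1| apply derivable_pt_lim_id].
        -- apply (derivable_pt_lim_mult (fun t => snd (cpow t y n)) (fun _ => y)); [exact IH2| apply derivable_pt_lim_const].
      * unfold id. lra.
    + apply deriv_ext with (fun t => fst (cpow t y n) * y + snd (cpow t y n) * t).
      { intro t; rewrite cpow_S; reflexivity. }
      eapply dlim_eq.
      * apply (derivable_pt_lim_plus (fun t => fst (cpow t y n) * y) (fun t => snd (cpow t y n) * t)).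
        -- apply (derivable_pt_lim_mult (fun t => fst (cpow t y n)) (fun _ => y)); [exact IH1| apply derivable_pt_lim_const].
        -- apply (derivable_pt_lim_mult (fun t => snd (cpow t y n)) id); [exact IH2| apply derivable_pt_lim_id].
      * unfold id. lra.
Qed.

Lemma cpow_dy x y n :
  derivable_pt_lim (fun t => fst (cpow x t n)) y (- (INR n * snd (cpow x y (pred n)))) /\
  derivable_pt_lim (fun t => snd (cpow x t n)) y (INR n * fst (cpow x y (pred n))).
Proof.
  induction n as [|n [IH1 IH2]].
  - simpl. split; (apply dlim_eq with 0; [apply derivable_pt_lim_const| ring]).
  - assert (E : INR n * fst (cpow x y (pred n)) * x - INR n * snd (cpow x y (pred n)) * y
                  = INR n * fst (cpow x y n)
             /\ INR n * fst (cpow x y (pred n)) * y + INR n * snd (cpow x y (pred n)) * x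
                  = INR n * snd (cpow x y n)).
    { destruct n. simpl; split; ring. simpl pred. rewrite cpow_S. cbn [fst snd]. split; ring. }
    destruct E as [E1 E2]. simpl pred. rewrite S_INR.
    split.
    + apply deriv_ext with (fun t => fst (cpow x t n) * x - snd (cpow x t n) * t).
      { intro t; rewrite cpow_S; reflexivity. }
      eapply dlim_eq.
      * apply (derivable_pt_lim_minus (fun t => fst (cpow x t n) * x) (fun t => snd (cpow x t n) * t)).
        -- apply (derivable_pt_lim_mult (fun t => fst (cpow x t n)) (fun _ => x)); [exact IH1| apply derivable_pt_lim_const].
        -- apply (derivable_pt_lim_mult (fun t => snd (cpow x t n)) id); [exact IH2| apply derivable_pt_lim_id].
      * unfold id. lra.
    + apply deriv_ext with (fun t => fst (cpow x t n) * t + snd (cpow x t n) * x).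
      { intro t; rewrite cpow_S; reflexivity. }
      eapply dlim_eq.
      * apply (derivable_pt_lim_plus (fun t => fst (cpow x t n) * t) (fun t => snd (cpow x t n) * x)).
        -- apply (derivable_pt_lim_mult (fun t => fst (cpow x t n)) id); [exact IH1| apply derivable_pt_lim_id].
        -- apply (derivable_pt_lim_mult (fun t => snd (cpow x t n)) (fun _ => x)); [exact IH2| apply derivable_pt_lim_const].
      * unfold id. lra.
Qed.

Lemma re_dx a c y x n :
  derivable_pt_lim (fun t => re_term a c t y n) x (INR n * re_term a c x y (pred n)).
Proof.
  destruct (cpow_dx y x n) as [H1 H2]. unfold re_term.
  eapply dlim_eq.
  - apply (derivable_pt_lim_minus (fun t => a * fst (cpow t y n)) (fun t => c * snd (cpow t y n))).
    + apply (derivable_pt_lim_scal (fun t => fst (cpow t y n))); exact H1.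
    + apply (derivable_pt_lim_scal (fun t => snd (cpow t y n))); exact H2.
  - ring.
Qed.

Lemma re_dy a c x y n :
  derivable_pt_lim (fun t => re_term a c x t n) y (- (INR n * im_term a c x y (pred n))).
Proof.
  destruct (cpow_dy x y n) as [H1 H2]. unfold re_term, im_term.
  eapply dlim_eq.
  - apply (derivable_pt_lim_minus (fun t => a * fst (cpow x t n)) (fun t => c * snd (cpow x t n))).
    + apply (derivable_pt_lim_scal (fun t => fst (cpow x t n))); exact H1.
    + apply (derivable_pt_lim_scal (fun t => snd (cpow x t n))); exact H2.
  - ring.
Qed.

Lemma im_dx a c y x n :
  derivable_pt_lim (fun t => im_term a c t y n) x (INR n * im_term a c x y (pred n)).
Proof.
  destruct (cpow_dx y x n) as [H1 H2]. unfold im_term.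
  eapply dlim_eq.
  - apply (derivable_pt_lim_plus (fun t => a * snd (cpow t y n)) (fun t => c * fst (cpow t y n))).
    + apply (derivable_pt_lim_scal (fun t => snd (cpow t y n))); exact H2.
    + apply (derivable_pt_lim_scal (fun t => fst (cpow t y n))); exact H1.
  - ring.
Qed.

Lemma im_dy a c x y n :
  derivable_pt_lim (fun t => im_term a c x t n) y (INR n * re_term a c x y (pred n)).
Proof.
  destruct (cpow_dy x y n) as [H1 H2]. unfold re_term, im_term.
  eapply dlim_eq.
  - apply (derivable_pt_lim_plus (fun t => a * snd (cpow x t n)) (fun t => c * fst (cpow x t n))).
    + apply (derivable_pt_lim_scal (fun t => snd (cpow x t n))); exact H2.
    + apply (derivable_pt_lim_scal (fun t => fst (cpow x t n))); exact H1.
  - ring.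
Qed.

Lemma term_norm a c x y n :
  re_term a c x y n ^ 2 + im_term a c x y n ^ 2 = (a^2 + c^2) * (x*x+y*y)^n.
Proof. unfold re_term, im_term. rewrite <- cpow_norm. ring. Qed.

Lemma sqrt_pow z m : 0 <= z -> sqrt (z ^ m) = sqrt z ^ m.
Proof.
  intro Hz. induction m. simpl; apply sqrt_1.
  simpl. rewrite sqrt_mult; [rewrite IHm; reflexivity | auto | apply pow_le; auto].
Qed.

Lemma abs_le_mod u v : Rabs u <= sqrt (u ^ 2 + v ^ 2).
Proof.
  rewrite <- sqrt_Rsqr_abs. apply sqrt_le_1_alt. unfold Rsqr. nra.
Qed.

Lemma mod_le_abs u v : sqrt (u ^ 2 + v ^ 2) <= Rabs u + Rabs v.
Proof.
  rewrite <- (sqrt_Rsqr (Rabs u + Rabs v)) by (pose proof (Rabs_pos u); pose proof (Rabs_pos v); lra).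
  apply sqrt_le_1_alt. unfold Rsqr.
  pose proof (Rabs_pos u); pose proof (Rabs_pos v).
  replace (u^2) with (Rabs u * Rabs u) by (rewrite <- Rabs_mult; rewrite Rabs_right; [ring| nra]).
  replace (v^2) with (Rabs v * Rabs v) by (rewrite <- Rabs_mult; rewrite Rabs_right; [ring| nra]).
  nra.
Qed.

Lemma CS_le e1 e2 t1 t2 : e1 * e1 + e2 * e2 <= 1 -> e1 * t1 + e2 * t2 <= sqrt (t1 ^ 2 + t2 ^ 2).
Proof.
  intro He. apply Rle_trans with (Rabs (e1 * t1 + e2 * t2)); [apply Rle_abs|].
  rewrite <- sqrt_Rsqr_abs. apply sqrt_le_1_alt. unfold Rsqr.
  assert (E : (e1 * t1 + e2 * t2) * (e1 * t1 + e2 * t2) + (e1 * t2 - e2 * t1) * (e1 * t2 - e2 * t1)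
      = (e1 * e1 + e2 * e2) * (t1 ^ 2 + t2 ^ 2)) by ring.
  assert (0 <= (e1 * t2 - e2 * t1) * (e1 * t2 - e2 * t1)) by apply Rle_0_sqr.
  assert (0 <= t1^2 + t2^2) by (pose proof (pow2_ge_0 t1); pose proof (pow2_ge_0 t2); lra).
  assert ((e1 * e1 + e2 * e2) * (t1 ^ 2 + t2 ^ 2) <= 1 * (t1 ^ 2 + t2 ^ 2)) by (apply Rmult_le_compat_r; lra).
  lra.
Qed.

Lemma tri_x x y h : sqrt ((x + h) * (x + h) + y * y) <= Rabs h + sqrt (x * x + y * y).
Proof.
  set (S := sqrt (x * x + y * y)).
  assert (HS : 0 <= S) by apply sqrt_pos.
  assert (HS2 : S * S = x * x + y * y) by (apply sqrt_sqrt; nra).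
  assert (Hx : Rabs x <= S).
  { rewrite <- sqrt_Rsqr_abs. apply sqrt_le_1_alt. unfold Rsqr. nra. }
  rewrite <- (sqrt_Rsqr (Rabs h + S)) by (pose proof (Rabs_pos h); lra).
  apply sqrt_le_1_alt. unfold Rsqr.
  assert (x * h <= Rabs h * S).
  { apply Rle_trans with (Rabs (x * h)); [apply Rle_abs|]. rewrite Rabs_mult.
    rewrite Rmult_comm. apply Rmult_le_compat_l; auto. apply Rabs_pos. }
  assert (Rabs h * Rabs h = h * h) by (rewrite <- Rabs_mult; apply Rabs_right; nra).
  nra.
Qed.

Lemma tri_y x y h : sqrt (x * x + (y + h) * (y + h)) <= Rabs h + sqrt (x * x + y * y).
Proof.
  rewrite (Rplus_comm (x*x)), (Rplus_comm (x*x)). apply tri_x.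
Qed.

Lemma sqrt_lt1 z : 0 <= z -> sqrt z < 1 -> z < 1.
Proof.
  intros Hz H. destruct (Rlt_le_dec z 1) as [|H1]; auto.
  apply sqrt_le_1_alt in H1. rewrite sqrt_1 in H1. lra.
Qed.

Lemma term_le_sum (f : nat -> R) k N : (forall i, 0 <= f i) -> (k <= N)%nat -> f k <= sum_f_R0 f N.
Proof.
  intros Hf Hk. induction Hk.
  - destruct k; simpl; [lra|]. pose proof (cond_pos_sum f k Hf). lra.
  - simpl. specialize (Hf (S m)). lra.
Qed.

Lemma sum_nonneg (f : nat -> R) N : (forall i, 0 <= f i) -> 0 <= sum_f_R0 f N.
Proof. intros; apply cond_pos_sum; auto. Qed.

Lemma terms_bounded (s : nat -> R) l : Un_cv (fun N => sum_f_R0 s N) l ->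
  exists K, forall k, Rabs (s k) <= K.
Proof.
  intro H. destruct (H 1 ltac:(lra)) as [N HN].
  exists (2 + sum_f_R0 (fun i => Rabs (s i)) N). intro k.
  assert (0 <= sum_f_R0 (fun i => Rabs (s i)) N) by (apply sum_nonneg; intro; apply Rabs_pos).
  destruct (Nat.le_gt_cases k N) as [Hk|Hk].
  - pose proof (term_le_sum (fun i => Rabs (s i)) k N (fun i => Rabs_pos _) Hk). simpl in *. lra.
  - destruct k as [|k]; [lia|].
    pose proof (HN (S k) ltac:(lia)) as H1. pose proof (HN k ltac:(lia)) as H2.
    unfold Rdist in *. simpl in H1. apply Rabs_def2 in H1. apply Rabs_def2 in H2.
    apply Rabs_le. lra.
Qed.

Lemma geom_cv t C : 0 <= t < 1 -> Un_cv (fun N => sum_f_R0 (fun k => C * t ^ k) N) (C / (1 - t)).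
Proof.
  intros Ht eps He.
  assert (Hp : 0 < eps * (1 - t) / (Rabs C + 1)).
  { apply Rdiv_lt_0_compat; [nra| pose proof (Rabs_pos C); lra]. }
  destruct (pow_lt_1_zero t ltac:(rewrite Rabs_right; lra) _ Hp) as [N HN].
  exists N. intros m Hm. unfold Rdist.
  rewrite (sum_eq _ (fun k => t ^ k * C)) by (intros; ring).
  rewrite <- scal_sum, tech3 by lra.
  replace (C * ((1 - t ^ S m) / (1 - t)) - C / (1 - t)) with (- (C * t ^ S m) / (1 - t))
    by (field; lra).
  unfold Rdiv. rewrite Rabs_mult, Rabs_Ropp, Rabs_mult, (Rabs_right (/ (1 - t)))
    by (apply Rle_ge, Rlt_le, Rinv_0_lt_compat; lra).
  specialize (HN (S m) ltac:(lia)).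
  assert (H1 : Rabs C * Rabs (t ^ S m) <= (Rabs C + 1) * Rabs (t ^ S m))
    by (pose proof (Rabs_pos (t ^ S m)); nra).
  assert (H2 : (Rabs C + 1) * Rabs (t ^ S m) < eps * (1 - t)).
  { apply Rmult_lt_reg_r with (/ (Rabs C + 1)). apply Rinv_0_lt_compat; pose proof (Rabs_pos C); lra.
    replace ((Rabs C + 1) * Rabs (t ^ S m) * / (Rabs C + 1)) with (Rabs (t ^ S m))
      by (field; pose proof (Rabs_pos C); lra). exact HN. }
  apply Rmult_lt_reg_r with (1 - t); [lra|].
  rewrite Rmult_assoc, Rinv_l by lra. lra.
Qed.

Lemma pow_le_one w m : 0 <= w <= 1 -> w ^ m <= 1.
Proof.
  intro H. induction m. simpl; lra. simpl. pose proof (pow_le w m (proj1 H)). nra.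
Qed.

Lemma pow_decr w m p : 0 <= w <= 1 -> (m <= p)%nat -> w ^ p <= w ^ m.
Proof.
  intros H Hmp. replace p with (m + (p - m))%nat by lia. rewrite pow_add.
  pose proof (pow_le_one w (p - m) H). pose proof (pow_le w m (proj1 H)). nra.
Qed.

Lemma term_mod a c x y m :
  sqrt (re_term a c x y m ^ 2 + im_term a c x y m ^ 2) = sqrt (a ^ 2 + c ^ 2) * sqrt (x * x + y * y) ^ m.
Proof.
  rewrite term_norm. rewrite sqrt_mult.
  - rewrite sqrt_pow; [reflexivity|]. pose proof (Rle_0_sqr x); pose proof (Rle_0_sqr y); unfold Rsqr in *; lra.
  - pose proof (pow2_ge_0 a); pose proof (pow2_ge_0 c); lra.
  - apply pow_le. pose proof (Rle_0_sqr x); pose proof (Rle_0_sqr y); unfold Rsqr in *; lra.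
Qed.

Lemma term_bound a c x y m r : sqrt (x * x + y * y) <= r ->
  Rabs (re_term a c x y m) <= sqrt (a ^ 2 + c ^ 2) * r ^ m /\
  Rabs (im_term a c x y m) <= sqrt (a ^ 2 + c ^ 2) * r ^ m.
Proof.
  intro Hr.
  assert (H : sqrt (a ^ 2 + c ^ 2) * sqrt (x * x + y * y) ^ m <= sqrt (a ^ 2 + c ^ 2) * r ^ m).
  { apply Rmult_le_compat_l; [apply sqrt_pos|]. apply pow_incr. split; auto. apply sqrt_pos. }
  rewrite <- term_mod in H. split.
  - eapply Rle_trans; [apply abs_le_mod| exact H].
  - eapply Rle_trans; [|exact H]. rewrite Rplus_comm. apply abs_le_mod.
Qed.

Lemma Rabs_def2' x a : Rabs x <= a -> x <= a /\ - a <= x.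
Proof. unfold Rabs. destruct Rcase_abs; intros; lra. Qed.

Section Main.
Variables (lam : R) (n : nat -> nat) (ar ai : nat -> R) (u : R -> R -> R).
Hypothesis lam_gt1 : lam > 1.
Hypothesis n_pos : (1 <= n 0)%nat.
Hypothesis n_gap : forall k, INR (n (S k)) >= lam * INR (n k).
Hypothesis conv_im : forall x y, x * x + y * y < 1 ->
     exists s, infinite_sum (fun k => im_term (ar (n k)) (ai (n k)) x y (n k)) s.
Hypothesis u_def : forall x y, x * x + y * y < 1 ->
     infinite_sum (fun k => re_term (ar (n k)) (ai (n k)) x y (n k)) (u x y).

Definition nb k := sqrt (ar (n k) ^ 2 + ai (n k) ^ 2).

Lemma nb_pos k : 0 <= nb k.
Proof. apply sqrt_pos. Qed.

Lemma n_ge1 k : (1 <= n k)%nat.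
Proof.
  induction k; auto.
  pose proof (n_gap k). assert (H1 : 1 <= INR (n k)) by (apply (le_INR 1); auto).
  assert (H2 : INR 0 < INR (n (S k))) by (simpl; nra).
  apply INR_lt in H2. lia.
Qed.

Lemma n_INR_ge1 k : 1 <= INR (n k).
Proof. apply (le_INR 1); apply n_ge1. Qed.

Lemma n_incr k : (n k < n (S k))%nat.
Proof.
  apply INR_lt. pose proof (n_gap k). pose proof (n_INR_ge1 k). nra.
Qed.

Lemma n_mono k k' : (k < k')%nat -> (n k < n k')%nat.
Proof.
  intro H. induction H. apply n_incr. pose proof (n_incr m). lia.
Qed.

Lemma n_inj k k' : n k = n k' -> k = k'.
Proof.
  intro H. destruct (Nat.lt_trichotomy k k') as [H1|[H1|H1]]; auto.
  apply n_mono in H1; lia. apply n_mono in H1; lia.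
Qed.

Lemma n_ge k : (k < n k)%nat.
Proof. induction k. apply n_ge1. pose proof (n_incr k). lia. Qed.

Lemma coef_bound rho : 0 < rho < 1 -> exists K, forall k, nb k * rho ^ (n k) <= K.
Proof.
  intro Hr.
  assert (Hin : rho * rho + 0 * 0 < 1) by nra.
  destruct (conv_im _ _ Hin) as [s Hs].
  pose proof (u_def _ _ Hin) as Hu.
  destruct (terms_bounded _ _ Hs) as [K1 HK1].
  destruct (terms_bounded _ _ Hu) as [K2 HK2].
  exists (K1 + K2). intro k. specialize (HK1 k). specialize (HK2 k).
  unfold re_term, im_term in *. rewrite cpow_real in *. cbn [fst snd] in *.
  unfold nb.
  apply Rle_trans with ((Rabs (ar (n k)) + Rabs (ai (n k))) * rho ^ (n k)).
  - apply Rmult_le_compat_r. apply pow_le; lra. apply mod_le_abs.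
  - assert (Hp : 0 <= rho ^ (n k)) by (apply pow_le; lra).
    replace (ai (n k) * 0 + ar (n k) * rho ^ n k) with (ar (n k) * rho ^ n k) in HK1 by ring.
    replace (ar (n k) * 0 + ai (n k) * rho ^ n k) with (ai (n k) * rho ^ n k) in HK1 by ring.
    replace (ar (n k) * rho ^ n k - ai (n k) * 0) with (ar (n k) * rho ^ n k) in HK2 by ring.
    rewrite Rabs_mult, (Rabs_right (rho ^ n k)) in HK1, HK2 by lra. nra.
Qed.

Definition Dr (r : R) (k : nat) := INR (n k) * nb k * r ^ pred (n k).

Lemma Dr_nonneg r k : 0 <= r -> 0 <= Dr r k.
Proof.
  intro. unfold Dr. pose proof (pos_INR (n k)). pose proof (nb_pos k).
  pose proof (pow_le r (pred (n k)) H). apply Rmult_le_pos; [apply Rmult_le_pos|]; auto.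
Qed.

Lemma bern h m : 0 <= h -> 1 + INR m * h <= (1 + h) ^ m.
Proof.
  intro Hh. induction m. simpl; lra.
  rewrite S_INR. simpl. pose proof (pos_INR m). nra.
Qed.

Lemma nvpow_bound v h m : 0 <= v -> 0 < h -> v * (1 + h) <= 1 -> INR m * v ^ pred m <= 1 + / h.
Proof.
  intros Hv Hh H.
  destruct m as [|m]. simpl. pose proof (Rinv_0_lt_compat h Hh). lra.
  simpl pred. rewrite S_INR.
  assert (H1 : (v * (1 + h)) ^ m <= 1) by (apply pow_le_one; split; nra).
  rewrite Rpow_mult_distr in H1.
  pose proof (bern h m (Rlt_le _ _ Hh)) as Hb.
  pose proof (pow_le v m Hv). pose proof (pos_INR m).
  assert (Hvm : v ^ m * (1 + INR m * h) <= 1) by nra.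
  assert (Hinv : 0 < / h) by (apply Rinv_0_lt_compat; auto).
  assert (Hhh : h * / h = 1) by (field; lra).
  assert (E : (INR m + 1) <= (1 + / h) * (1 + INR m * h)) by nra.
  assert (Hpos : 0 < 1 + INR m * h) by nra.
  apply Rle_trans with ((1 + / h) * (1 + INR m * h) * v ^ m).
  - apply Rmult_le_compat_r; auto.
  - rewrite Rmult_assoc. rewrite <- (Rmult_1_r (1 + / h)) at 2.
    apply Rmult_le_compat_l; lra.
Qed.

Lemma Dr_cv r : 0 <= r < 1 -> exists l, Un_cv (fun N => sum_f_R0 (Dr r) N) l.
Proof.
  intro Hr.
  set (rho := (1 + r) / 2).
  assert (Hrho : 0 < rho < 1) by (unfold rho; lra).
  destruct (coef_bound rho Hrho) as [K HK].
  assert (HK0 : 0 <= K).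
  { specialize (HK 0%nat). pose proof (nb_pos 0). pose proof (pow_le rho (n 0) (Rlt_le _ _ (proj1 Hrho))). nra. }
  set (s := r / rho).
  assert (Hs : 0 <= s < 1).
  { unfold s. split. apply Rmult_le_pos; [lra| left; apply Rinv_0_lt_compat; lra].
    apply Rmult_lt_reg_r with rho; [lra|]. unfold Rdiv. rewrite Rmult_assoc, Rinv_l by lra. unfold rho. lra. }
  set (t := (1 + s) / 2).
  assert (Ht : 0 < t < 1) by (unfold t; lra).
  assert (Hts : s < t) by (unfold t; lra).
  set (h := (t - s) / t).
  assert (Hh : 0 < h) by (unfold h; apply Rdiv_lt_0_compat; lra).
  set (v := s / t).
  assert (Hv : 0 <= v) by (unfold v; apply Rmult_le_pos; [lra| left; apply Rinv_0_lt_compat; lra]).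
  assert (Hvh : v * (1 + h) <= 1).
  { unfold v, h. replace (s / t * (1 + (t - s) / t)) with (s * (2 * t - s) / (t * t)) by (field; lra).
    assert (Htt : 0 < t * t) by (apply Rmult_lt_0_compat; lra).
    apply Rmult_le_reg_r with (t * t); [lra|]. unfold Rdiv. rewrite Rmult_assoc, Rinv_l by lra.
    assert (0 <= (t - s) * (t - s)) by apply Rle_0_sqr. lra. }
  set (C := (1 + / h) * (K / rho)).
  destruct (dom_cv (Dr r) (fun k => C * t ^ k) (C / (1 - t))) as [l Hl].
  2: { apply geom_cv; lra. }
  2: { exists l; exact Hl. }
  intro k. rewrite Rabs_right by (apply Rle_ge, Dr_nonneg; lra).
  unfold Dr.
  assert (Hr' : r = v * t * rho) by (unfold v, s; field; lra).
  rewrite Hr', !Rpow_mult_distr.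
  pose proof (nvpow_bound v h (n k) Hv Hh Hvh) as H1.
  assert (H2 : nb k * rho ^ pred (n k) <= K / rho).
  { pose proof (HK k) as HKk. pose proof (n_ge1 k).
    replace (n k) with (S (pred (n k))) in HKk by lia. simpl in HKk.
    apply Rmult_le_reg_r with rho; [lra|]. unfold Rdiv. rewrite (Rmult_assoc K), Rinv_l by lra. lra. }
  assert (H3 : t ^ pred (n k) <= t ^ k) by (apply pow_decr; [lra| pose proof (n_ge k); lia]).
  pose proof (pow_le v (pred (n k)) Hv). pose proof (pow_le t (pred (n k)) (Rlt_le _ _ (proj1 Ht))).
  pose proof (pow_le rho (pred (n k)) (Rlt_le _ _ (proj1 Hrho))).
  pose proof (pos_INR (n k)). pose proof (nb_pos k).
  assert (H4a : 0 <= INR (n k) * v ^ pred (n k)) by nra.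
  assert (H5a : 0 <= nb k * rho ^ pred (n k)) by nra.
  replace (INR (n k) * nb k * (v ^ pred (n k) * t ^ pred (n k) * rho ^ pred (n k)))
    with ((INR (n k) * v ^ pred (n k)) * (nb k * rho ^ pred (n k)) * t ^ pred (n k)) by ring.
  unfold C.
  apply Rle_trans with ((1 + / h) * (K / rho) * t ^ pred (n k)).
  - apply Rmult_le_compat_r; auto. apply Rmult_le_compat; auto.
  - apply Rmult_le_compat_l; auto. apply Rmult_le_pos. pose proof (Rinv_0_lt_compat h Hh); lra.
    apply Rmult_le_pos; auto. left; apply Rinv_0_lt_compat; lra.
Qed.

Definition dre x y k := INR (n k) * re_term (ar (n k)) (ai (n k)) x y (pred (n k)).
Definition ndim x y k := - (INR (n k) * im_term (ar (n k)) (ai (n k)) x y (pred (n k))).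
Definition G1 x y := slim (dre x y).
Definition G2 x y := slim (ndim x y).

Lemma d_bound x y r k : sqrt (x * x + y * y) <= r ->
  Rabs (dre x y k) <= Dr r k /\ Rabs (ndim x y k) <= Dr r k.
Proof.
  intro Hr. destruct (term_bound (ar (n k)) (ai (n k)) x y (pred (n k)) r Hr) as [H1 H2].
  unfold dre, ndim, Dr, nb. rewrite Rabs_Ropp, !Rabs_mult, (Rabs_right (INR (n k))) by (apply Rle_ge, pos_INR).
  pose proof (pos_INR (n k)). rewrite !Rmult_assoc. split; apply Rmult_le_compat_l; auto.
Qed.

Lemma G_cv x y : x * x + y * y < 1 ->
  Un_cv (fun N => sum_f_R0 (dre x y) N) (G1 x y) /\ Un_cv (fun N => sum_f_R0 (ndim x y) N) (G2 x y).
Proof.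
  intro Hxy. set (r := sqrt (x * x + y * y)).
  assert (Hr : 0 <= r < 1).
  { split. apply sqrt_pos. unfold r. rewrite <- sqrt_1. apply sqrt_lt_1_alt. split; [|lra].
    pose proof (Rle_0_sqr x); pose proof (Rle_0_sqr y); unfold Rsqr in *; lra. }
  destruct (Dr_cv r Hr) as [l Hl].
  split; apply slim_spec; eapply dom_cv; try exact Hl; intro k; apply (d_bound x y r k); unfold r; lra.
Qed.

Lemma sq_nonneg2 x y : 0 <= x * x + y * y.
Proof. pose proof (Rle_0_sqr x); pose proof (Rle_0_sqr y); unfold Rsqr in *; lra. Qed.

Lemma derivs x y : x * x + y * y < 1 ->
  derivable_pt_lim (fun t => u t y) x (G1 x y) /\ derivable_pt_lim (fun t => u x t) y (G2 x y).
Proof.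
  intro Hxy. set (S := sqrt (x * x + y * y)).
  assert (HS : 0 <= S < 1).
  { split. apply sqrt_pos. unfold S. rewrite <- sqrt_1. apply sqrt_lt_1_alt. split; [apply sq_nonneg2|lra]. }
  set (r := (S + 1) / 2). assert (Hr : 0 <= r < 1) by (unfold r; lra).
  destruct (Dr_cv r Hr) as [l Hl].
  assert (Hd : 0 < r - S) by (unfold r; lra).
  split.
  - apply (series_deriv (fun k t => re_term (ar (n k)) (ai (n k)) t y (n k)) (fun k t => dre t y k)
             (Dr r) (fun t => u t y) x (r - S) l Hd).
    + intros k t _. apply re_dx.
    + intros k t _. apply derivable_continuous_pt. unfold dre.
      exists (INR (n k) * (INR (pred (n k)) * re_term (ar (n k)) (ai (n k)) t y (pred (pred (n k))))).
      apply (derivable_pt_lim_scal (fun s => re_term (ar (n k)) (ai (n k)) s y (pred (n k)))). apply re_dx.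
    + intros k t Ht. apply (d_bound t y r k).
      replace t with (x + (t - x)) by ring. eapply Rle_trans; [apply tri_x|]. fold S. lra.
    + exact Hl.
    + intros t Ht. apply u_def.
      assert (sqrt (t * t + y * y) < 1).
      { replace t with (x + (t - x)) by ring. eapply Rle_lt_trans; [apply tri_x|]. fold S. unfold r in Ht. lra. }
      apply sqrt_lt1; auto. apply sq_nonneg2.
  - apply (series_deriv (fun k t => re_term (ar (n k)) (ai (n k)) x t (n k)) (fun k t => ndim x t k)
             (Dr r) (fun t => u x t) y (r - S) l Hd).
    + intros k t _. apply re_dy.
    + intros k t _. apply derivable_continuous_pt. unfold ndim.
      exists (- (INR (n k) * (INR (pred (n k)) * re_term (ar (n k)) (ai (n k)) x t (pred (pred (n k)))))).
      apply (derivable_pt_lim_opp (fun s => INR (n k) * im_term (ar (n k)) (ai (n k)) x s (pred (n k)))).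
      apply (derivable_pt_lim_scal (fun s => im_term (ar (n k)) (ai (n k)) x s (pred (n k)))). apply im_dy.
    + intros k t Ht. apply (d_bound x t r k).
      replace t with (y + (t - y)) by ring. eapply Rle_trans; [apply tri_y|]. fold S. lra.
    + exact Hl.
    + intros t Ht. apply u_def.
      assert (sqrt (x * x + t * t) < 1).
      { replace t with (y + (t - y)) by ring. eapply Rle_lt_trans; [apply tri_y|]. fold S. unfold r in Ht. lra. }
      apply sqrt_lt1; auto. apply sq_nonneg2.
Qed.

Lemma bloch_iff (mu : R -> R) : in_Bloch_mu mu u <->
  exists M, forall x y, x * x + y * y < 1 ->
    Rabs (u 0 0) + mu (sqrt (x * x + y * y)) * sqrt (G1 x y * G1 x y + G2 x y * G2 x y) <= M.
Proof.
  split.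
  - intros [M HM]. exists M. intros x y Hxy. destruct (HM x y Hxy) as [ux [uy [H1 [H2 H3]]]].
    destruct (derivs x y Hxy) as [D1 D2].
    rewrite (uniqueness_limite _ _ _ _ D1 H1), (uniqueness_limite _ _ _ _ D2 H2). exact H3.
  - intros [M HM]. exists M. intros x y Hxy. exists (G1 x y), (G2 x y).
    destruct (derivs x y Hxy) as [D1 D2]. repeat split; auto.
Qed.


Lemma cv_scal (v : nat -> R) l c : Un_cv v l -> Un_cv (fun N => c * v N) (c * l).
Proof. intro H. apply (CV_mult (fun _ => c) v); [apply cv_const| exact H]. Qed.

Lemma dmod x y k : sqrt (dre x y k ^ 2 + ndim x y k ^ 2) = Dr (sqrt (x * x + y * y)) k.
Proof.
  unfold dre, ndim, Dr, nb.
  replace ((INR (n k) * re_term (ar (n k)) (ai (n k)) x y (pred (n k))) ^ 2 +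
           (- (INR (n k) * im_term (ar (n k)) (ai (n k)) x y (pred (n k)))) ^ 2)
    with (INR (n k) ^ 2 * (re_term (ar (n k)) (ai (n k)) x y (pred (n k)) ^ 2 +
           im_term (ar (n k)) (ai (n k)) x y (pred (n k)) ^ 2)) by ring.
  rewrite sqrt_mult, sqrt_pow2, term_mod.
  - ring.
  - apply pos_INR.
  - apply pow2_ge_0.
  - pose proof (pow2_ge_0 (re_term (ar (n k)) (ai (n k)) x y (pred (n k)))).
    pose proof (pow2_ge_0 (im_term (ar (n k)) (ai (n k)) x y (pred (n k)))). lra.
Qed.

Lemma grad_bound x y lD : x * x + y * y < 1 ->
  Un_cv (fun N => sum_f_R0 (Dr (sqrt (x * x + y * y))) N) lD ->
  sqrt (G1 x y * G1 x y + G2 x y * G2 x y) <= lD.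
Proof.
  intros Hxy HD. destruct (G_cv x y Hxy) as [C1 C2].
  set (g := sqrt (G1 x y * G1 x y + G2 x y * G2 x y)).
  assert (Hg : 0 <= g) by apply sqrt_pos.
  assert (Hg2 : g * g = G1 x y * G1 x y + G2 x y * G2 x y) by (apply sqrt_sqrt; apply sq_nonneg2).
  destruct (Req_dec g 0) as [Hg0|Hg0].
  - rewrite Hg0. apply (le_lim_ev (fun _ => 0) (fun N => sum_f_R0 (Dr (sqrt (x * x + y * y))) N) 0 lD 0).
    + intros; apply sum_nonneg. intro; apply Dr_nonneg, sqrt_pos.
    + apply cv_const.
    + exact HD.
  - set (e1 := G1 x y / g). set (e2 := G2 x y / g).
    assert (He : e1 * e1 + e2 * e2 <= 1).
    { unfold e1, e2. right.
      replace (G1 x y / g * (G1 x y / g) + G2 x y / g * (G2 x y / g))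
        with ((G1 x y * G1 x y + G2 x y * G2 x y) / (g * g)) by (field; exact Hg0).
      rewrite <- Hg2. field. exact Hg0. }
    assert (Hgeq : g = e1 * G1 x y + e2 * G2 x y).
    { unfold e1, e2.
      replace (G1 x y / g * G1 x y + G2 x y / g * G2 x y)
        with ((G1 x y * G1 x y + G2 x y * G2 x y) / g) by (field; exact Hg0).
      rewrite <- Hg2. field. exact Hg0. }
    rewrite Hgeq.
    apply (le_lim_ev (fun N => e1 * sum_f_R0 (dre x y) N + e2 * sum_f_R0 (ndim x y) N)
             (fun N => sum_f_R0 (Dr (sqrt (x * x + y * y))) N) _ lD 0).
    + intros p _. rewrite !scal_sum, <- plus_sum. apply sum_Rle. intros k _.
      rewrite <- dmod. rewrite (Rmult_comm (dre x y k)), (Rmult_comm (ndim x y k)). apply CS_le; auto.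
    + apply CV_plus; apply cv_scal; auto.
    + exact HD.
Qed.

End Main.

Lemma sum_grow (f : nat -> R) K K' : (forall i, 0 <= f i) -> (K <= K')%nat -> sum_f_R0 f K <= sum_f_R0 f K'.
Proof. intros Hf H. induction H. lra. simpl. specialize (Hf (S m)). lra. Qed.

Lemma sum_stable (f : nat -> R) N K : (forall i, (N < i <= K)%nat -> f i = 0) -> (N <= K)%nat ->
  sum_f_R0 f K = sum_f_R0 f N.
Proof.
  intros Hf H. induction H. reflexivity. simpl. rewrite IHle, Hf. ring. lia.
  intros i Hi; apply Hf; lia.
Qed.

Lemma nat_lin_pow R j : (2 <= R)%nat -> (R * j <= R ^ j)%nat.
Proof.
  intro HR. assert (H : forall j, (j + 1 <= R ^ j)%nat).
  { induction j0. simpl; lia. simpl. nia. }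
  destruct j. simpl; lia. specialize (H j). simpl. nia.
Qed.

Lemma nat_sq_pow p : (4 <= p)%nat -> (p * p <= 2 ^ p)%nat.
Proof.
  intro H. induction H. simpl; lia. simpl. nia.
Qed.

Lemma exists_N0 x : 1 <= x -> exists N : nat, (1 <= N)%nat /\ INR N <= x /\ x < INR N + 1.
Proof.
  intro Hx. destruct (archimed x) as [H1 H2].
  set (z := up x) in *.
  assert (Hz : (2 <= z)%Z).
  { assert (1 < IZR z) by lra. apply lt_IZR in H. lia. }
  exists (Z.to_nat z - 1)%nat.
  assert (E : INR (Z.to_nat z) = IZR z) by (rewrite INR_IZR_INZ, Z2Nat.id; [reflexivity| lia]).
  assert (HN : (2 <= Z.to_nat z)%nat) by lia.
  rewrite minus_INR by lia. rewrite E. simpl. repeat split; [lia| lra| lra].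
Qed.

Section Suff.
Variables (lam : R) (n : nat -> nat) (ar ai : nat -> R) (mu : R -> R) (B : R).
Hypothesis lam_gt1 : lam > 1.
Hypothesis n_pos : (1 <= n 0)%nat.
Hypothesis n_gap : forall k, INR (n (S k)) >= lam * INR (n k).
Hypothesis mu_pos : forall r, 0 <= r < 1 -> 0 < mu r.
Hypothesis mu_decr : forall r s, 0 <= r -> r <= s -> s < 1 -> mu s <= mu r.
Hypothesis B_pos : B > 0.
Hypothesis mu_doub : forall d, 0 < d <= 1 -> mu (1 - d / 2) >= B * mu (1 - d).

Definition Sn N := sum_f_R0 (fun k => if Nat.leb (n k) N then INR (n k) * nb n ar ai k else 0) N.

Let nge := n_ge lam n lam_gt1 n_pos n_gap.
Let nmono := n_mono lam n lam_gt1 n_pos n_gap.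

Lemma cterm_nonneg N k : 0 <= (if Nat.leb (n k) N then INR (n k) * nb n ar ai k else 0).
Proof. destruct (Nat.leb (n k) N); [pose proof (pos_INR (n k)); pose proof (nb_pos n ar ai k); nra| lra]. Qed.

Lemma Sn_ext K N : sum_f_R0 (fun k => if Nat.leb (n k) N then INR (n k) * nb n ar ai k else 0) K <= Sn N.
Proof.
  unfold Sn. destruct (Nat.le_gt_cases K N) as [H|H].
  - apply sum_grow; auto. intro; apply cterm_nonneg.
  - rewrite (sum_stable _ N K); [lra| |lia].
    intros i Hi. pose proof (nge i). destruct (Nat.leb_spec (n i) N); [lia| reflexivity].
Qed.

Lemma Sn_nonneg N : 0 <= Sn N.
Proof. apply sum_nonneg; intro; apply cterm_nonneg. Qed.

Lemma doub_iter m d : 0 < d <= 1 -> mu (1 - d / 2 ^ m) >= B ^ m * mu (1 - d).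
Proof.
  intro Hd. induction m.
  - simpl. replace (d / 1) with d by field. lra.
  - assert (H2 : 0 < 2 ^ m) by (apply pow_lt; lra).
    assert (H1 : 1 <= 2 ^ m) by (apply pow_R1_Rle; lra).
    replace (d / 2 ^ S m) with ((d / 2 ^ m) / 2) by (simpl; field; lra).
    assert (Hd' : 0 < d / 2 ^ m <= 1).
    { split. apply Rdiv_lt_0_compat; lra. apply Rmult_le_reg_r with (2 ^ m); [lra|].
      unfold Rdiv. rewrite Rmult_assoc, Rinv_l by lra. lra. }
    pose proof (mu_doub _ Hd'). simpl.
    assert (0 < B ^ m) by (apply pow_lt; lra). nra.
Qed.

Definition T K s X := sum_f_R0 (fun k => if Nat.leb (n k) X then Dr n ar ai s k else 0) K.

Lemma T_full K s X : (n K <= X)%nat -> T K s X = sum_f_R0 (Dr n ar ai s) K.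
Proof.
  intro H. unfold T. apply sum_eq. intros i Hi.
  destruct (Nat.leb_spec (n i) X); [reflexivity|].
  destruct (Nat.eq_dec i K). subst; lia. pose proof (nmono i K ltac:(lia)). lia.
Qed.

Lemma T_base K s X : 0 <= s <= 1 -> T K s X <= Sn X.
Proof.
  intro Hs. eapply Rle_trans; [|apply (Sn_ext K X)]. unfold T. apply sum_Rle. intros k _.
  destruct (Nat.leb (n k) X); [|lra]. unfold Dr.
  pose proof (pow_le_one s (pred (n k)) Hs). pose proof (pow_le s (pred (n k)) (proj1 Hs)).
  pose proof (pos_INR (n k)). pose proof (nb_pos n ar ai k).
  assert (0 <= INR (n k) * nb n ar ai k) by nra. nra.
Qed.

Lemma T_step K s X0 X1 w : 0 <= s <= 1 -> (X0 <= X1)%nat -> s ^ X0 <= w ->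
  T K s X1 - T K s X0 <= w * Sn X1.
Proof.
  intros Hs HX Hw.
  assert (Hw0 : 0 <= w) by (pose proof (pow_le s X0 (proj1 Hs)); lra).
  apply Rle_trans with (w * sum_f_R0 (fun k => if Nat.leb (n k) X1 then INR (n k) * nb n ar ai k else 0) K).
  2: { apply Rmult_le_compat_l; auto. apply Sn_ext. }
  unfold T. rewrite <- minus_sum, scal_sum. apply sum_Rle. intros k _.
  pose proof (pos_INR (n k)). pose proof (nb_pos n ar ai k).
  assert (Hc : 0 <= INR (n k) * nb n ar ai k) by nra.
  unfold Dr.
  destruct (Nat.leb_spec (n k) X1); destruct (Nat.leb_spec (n k) X0).
  - pose proof (pow_le s (pred (n k)) (proj1 Hs)). nra.
  - assert (s ^ pred (n k) <= s ^ X0) by (apply pow_decr; auto; lia). nra.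
  - lia.
  - nra.
Qed.

Lemma T_acc K s (X : nat -> nat) A (b : nat -> R) :
  T K s (X O) <= A -> (forall j, T K s (X (S j)) - T K s (X j) <= b j) ->
  forall J, T K s (X (S J)) <= A + sum_f_R0 b J.
Proof.
  intros H0 Hs J. induction J.
  - simpl. specialize (Hs O). lra.
  - simpl. specialize (Hs (S J)). lra.
Qed.

Lemma half_sum J : sum_f_R0 (fun j => (/2) ^ j) J <= 2.
Proof.
  rewrite tech3 by lra. assert (0 < (/2) ^ S J) by (apply pow_lt; lra).
  replace ((1 - (/ 2) ^ S J) / (1 - / 2)) with (2 - 2 * (/2) ^ S J) by field. lra.
Qed.

Lemma suff_bound C : (forall N, (1 <= N)%nat -> Sn N <= C / mu (1 - 1 / INR N)) ->
  exists C', forall s K, 0 <= s < 1 -> sum_f_R0 (Dr n ar ai s) K <= C' / mu s.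
Proof.
  intro HS.
  assert (HC : 0 <= C).
  { specialize (HS 1%nat (le_n 1)). pose proof (Sn_nonneg 1).
    assert (Hm : 0 < mu (1 - 1 / INR 1)) by (apply mu_pos; simpl; split; lra).
    destruct (Rle_dec 0 C) as [|HC]; auto. exfalso.
    assert (C / mu (1 - 1 / INR 1) < 0).
    { unfold Rdiv. apply Rmult_neg_pos; [lra| apply Rinv_0_lt_compat; auto]. }
    lra. }
  set (gam := 2 / 3).
  destruct (pow_lt_1_zero gam ltac:(unfold gam; rewrite Rabs_right; lra) (B / 2) ltac:(lra)) as [p0 Hp0].
  set (p := (p0 + 4)%nat).
  assert (Hgp : gam ^ p <= B / 2).
  { specialize (Hp0 p ltac:(unfold p; lia)). rewrite Rabs_right in Hp0 by (apply Rle_ge, pow_le; unfold gam; lra). lra. }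
  assert (Hg2p : gam ^ (2 ^ p) <= B ^ p / 2).
  { apply Rle_trans with (gam ^ (p * p)).
    - apply pow_decr; [unfold gam; lra|]. apply nat_sq_pow; unfold p; lia.
    - rewrite pow_mult. apply Rle_trans with ((B / 2) ^ p).
      + apply pow_incr. split; auto. apply pow_le; unfold gam; lra.
      + unfold Rdiv. rewrite Rpow_mult_distr.
        assert ((/ 2) ^ p <= / 2).
        { replace p with (S (p0 + 3)) by (unfold p; lia). simpl.
          pose proof (pow_le_one (/2) (p0 + 3) ltac:(lra)). pose proof (pow_le (/2) (p0+3) ltac:(lra)). nra. }
        assert (0 < B ^ p) by (apply pow_lt; lra). nra. }
  assert (HBp : 0 < B ^ p) by (apply pow_lt; lra).
  exists (C + 2 * C / B ^ p). intros s K Hs.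
  assert (Hmus : 0 < mu s) by (apply mu_pos; auto).
  destruct (exists_N0 (1 / (1 - s))) as [N0 [HN01 [HN02 HN03]]].
  { apply Rmult_le_reg_r with (1 - s); [lra|]. unfold Rdiv. rewrite Rmult_assoc, Rinv_l by lra. lra. }
  assert (HN0R : 1 <= INR N0) by (apply (le_INR 1); auto).
  assert (Hd : 1 - s <= 1 / INR N0).
  { assert (H1 : (1 - s) * INR N0 <= 1).
    { apply Rle_trans with ((1 - s) * (1 / (1 - s))). apply Rmult_le_compat_l; lra.
      right; field; lra. }
    apply Rmult_le_reg_r with (INR N0); [lra|].
    replace (1 / INR N0 * INR N0) with 1 by (field; lra). lra. }
  assert (Hmu0 : mu s <= mu (1 - 1 / INR N0)).
  { apply mu_decr; try lra. assert (0 < 1 / INR N0) by (apply Rdiv_lt_0_compat; lra).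
    assert (1 / INR N0 <= 1).
    { apply Rmult_le_reg_r with (INR N0); [lra|]. replace (1 / INR N0 * INR N0) with 1 by (field; lra). lra. }
    lra. }
  assert (HsN0 : s ^ N0 <= gam).
  { set (d := 1 - s).
    assert (Hb : 1 + INR N0 * d <= (1 + d) ^ N0) by (apply bern; unfold d; lra).
    assert (Hp1 : (s * (1 + d)) ^ N0 <= 1).
    { apply pow_le_one. unfold d. split; nra. }
    rewrite Rpow_mult_distr in Hp1.
    pose proof (pow_le s N0 (proj1 Hs)).
    assert (Hsd : s ^ N0 * (1 + INR N0 * d) <= 1) by nra.
    assert (HNd : INR N0 * d > s).
    { unfold d. apply Rmult_lt_reg_r with (/ (1 - s)). apply Rinv_0_lt_compat; lra.
      rewrite Rmult_assoc, Rinv_r by lra. unfold Rdiv in HN03.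
      replace (s * / (1 - s)) with (1 * / (1 - s) - 1) by (field; lra). lra. }
    unfold gam. destruct (Rle_lt_dec (1/2) s).
    - nra.
    - assert (s ^ N0 <= s ^ 1) by (apply pow_decr; [lra| auto]). simpl in *. lra. }
  set (X := fun j => (2 ^ (p * j) * N0)%nat).
  assert (HXS : forall j, (1 <= X j)%nat).
  { intro j. unfold X. pose proof (Nat.pow_nonzero 2 (p * j) ltac:(lia)). nia. }
  assert (HXR : forall j, INR (X j) = 2 ^ (p * j) * INR N0).
  { intro j. unfold X. rewrite mult_INR, pow_INR. reflexivity. }
  assert (Hblock : forall j, T K s (X (S j)) - T K s (X j) <= (C / (B ^ p * mu s)) * (/2) ^ j).
  { intro j.
    assert (HsX : s ^ X j <= (B ^ p / 2) ^ j).
    { unfold X. rewrite Nat.mul_comm, pow_mult.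
      apply Rle_trans with (gam ^ (2 ^ (p * j))).
      { apply pow_incr. split; auto. apply pow_le; lra. }
      apply Rle_trans with (gam ^ (2 ^ p * j)).
      { apply pow_decr; [unfold gam; lra|]. rewrite Nat.pow_mul_r. apply nat_lin_pow.
        pose proof (Nat.pow_le_mono_r 2 1 p ltac:(lia) ltac:(unfold p; lia)). simpl in H. lia. }
      rewrite pow_mult. apply pow_incr. split; auto. apply pow_le; unfold gam; lra. }
    eapply Rle_trans; [apply (T_step K s (X j) (X (S j)) ((B ^ p / 2) ^ j)); auto; try lra|].
    { unfold X. apply Nat.mul_le_mono_r. apply Nat.pow_le_mono_r; lia. }
    assert (HSn : Sn (X (S j)) <= C / (B ^ p * B ^ (p * j) * mu s)).
    { eapply Rle_trans; [apply HS; auto|].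
      assert (Hdj : 0 < 1 / INR N0 <= 1).
      { split. apply Rdiv_lt_0_compat; lra. apply Rmult_le_reg_r with (INR N0); [lra|].
        unfold Rdiv. rewrite Rmult_assoc, Rinv_l by lra. lra. }
      pose proof (doub_iter (p * S j) (1 / INR N0) Hdj) as Hdb.
      replace (1 / INR N0 / 2 ^ (p * S j)) with (1 / INR (X (S j))) in Hdb
        by (rewrite HXR; field; split; [lra| apply pow_nonzero; lra]).
      replace (B ^ p * B ^ (p * j)) with (B ^ (p * S j)) by (rewrite <- pow_add; f_equal; lia).
      assert (HBj : 0 < B ^ (p * S j)) by (apply pow_lt; lra).
      assert (Hmx : 0 < mu (1 - 1 / INR (X (S j)))).
      { apply mu_pos. pose proof (HXS (S j)). assert (1 <= INR (X (S j))) by (apply (le_INR 1); auto).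
        split. apply Rmult_le_reg_r with (INR (X (S j))); [lra|].
        unfold Rdiv. rewrite Rmult_minus_distr_r, Rmult_assoc, Rinv_l by lra. lra.
        assert (0 < 1 / INR (X (S j))) by (apply Rdiv_lt_0_compat; lra). lra. }
      unfold Rdiv. apply Rmult_le_compat_l; auto. apply Rinv_le_contravar.
      apply Rmult_lt_0_compat; auto. nra. }
    assert (Hpw : 0 <= (B ^ p / 2) ^ j) by (apply pow_le; lra).
    apply Rle_trans with ((B ^ p / 2) ^ j * (C / (B ^ p * B ^ (p * j) * mu s))).
    { apply Rmult_le_compat_l; auto. }
    right. rewrite pow_mult. unfold Rdiv. rewrite Rpow_mult_distr.
    assert (0 < (B ^ p) ^ j) by (apply pow_lt; lra).
    assert (0 < (/ 2) ^ j) by (apply pow_lt; lra).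
    field. repeat split; lra. }
  rewrite <- (T_full K s (X (S (n K)))).
  2: { unfold X. pose proof (Nat.pow_gt_lin_r 2 (p * S (n K)) ltac:(lia)). nia. }
  eapply Rle_trans.
  { apply (T_acc K s X (C / mu s) (fun j => (C / (B ^ p * mu s)) * (/2) ^ j)).
    - eapply Rle_trans; [apply T_base; lra|]. replace (X O) with N0 by (unfold X; rewrite Nat.mul_0_r; simpl; lia).
      eapply Rle_trans; [apply HS; auto|]. unfold Rdiv. apply Rmult_le_compat_l; auto.
      apply Rinv_le_contravar; auto.
    - exact Hblock. }
  rewrite (sum_eq _ (fun j => (/ 2) ^ j * (C / (B ^ p * mu s)))) by (intros; ring).
  rewrite <- scal_sum.
  assert (HcB : 0 <= C / (B ^ p * mu s)) by (apply Rmult_le_pos; auto; left; apply Rinv_0_lt_compat; nra).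
  pose proof (half_sum (n K)).
  apply Rle_trans with (C / mu s + C / (B ^ p * mu s) * 2).
  - apply Rplus_le_compat_l. apply Rmult_le_compat_l; auto.
  - right. field. split; lra.
Qed.
End Suff.

Definition Avg (L : nat) (F : R -> R) : R :=
  sum_f_R0 (fun j => F (2 * PI * INR j / INR L)) (pred L) / INR L.

Lemma Avg_ext L F G : (forall t, F t = G t) -> Avg L F = Avg L G.
Proof. intro H. unfold Avg. f_equal. apply sum_eq. intros; apply H. Qed.

Lemma Avg_plus L F G : Avg L (fun t => F t + G t) = Avg L F + Avg L G.
Proof. unfold Avg. rewrite plus_sum. unfold Rdiv. ring. Qed.

Lemma Avg_scal L c F : Avg L (fun t => c * F t) = c * Avg L F.
Proof.
  unfold Avg. rewrite (sum_eq _ (fun j => F (2 * PI * INR j / INR L) * c)) by (intros; ring).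
  rewrite <- scal_sum. unfold Rdiv. ring.
Qed.

Lemma Avg_le L F G : (1 <= L)%nat -> (forall t, F t <= G t) -> Avg L F <= Avg L G.
Proof.
  intros HL H. unfold Avg. unfold Rdiv. apply Rmult_le_compat_r.
  left; apply Rinv_0_lt_compat; apply lt_0_INR; lia.
  apply sum_Rle. intros; apply H.
Qed.

Lemma Avg_const L c : (1 <= L)%nat -> Avg L (fun _ => c) = c.
Proof.
  intro HL. unfold Avg. rewrite sum_cte. replace (S (pred L)) with L by lia.
  field. apply not_0_INR; lia.
Qed.

Lemma Avg_sum L (F : nat -> R -> R) K : Avg L (fun t => sum_f_R0 (fun k => F k t) K) = sum_f_R0 (fun k => Avg L (F k)) K.
Proof.
  induction K. reflexivity. simpl. rewrite <- IHK. apply (Avg_plus L (fun t => sum_f_R0 (fun k => F k t) K) (F (S K))).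
Qed.

Lemma tele_sin a j : 2 * sin (a / 2) * cos (INR j * a) =
  sin ((INR (S j) - /2) * a) - sin ((INR j - /2) * a).
Proof.
  rewrite S_INR.
  replace ((INR j + 1 - / 2) * a) with (INR j * a + a / 2) by field.
  replace ((INR j - / 2) * a) with (INR j * a - a / 2) by field.
  rewrite sin_plus, sin_minus. ring.
Qed.

Lemma tele_cos a j : 2 * sin (a / 2) * sin (INR j * a) =
  - (cos ((INR (S j) - /2) * a) - cos ((INR j - /2) * a)).
Proof.
  rewrite S_INR.
  replace ((INR j + 1 - / 2) * a) with (INR j * a + a / 2) by field.
  replace ((INR j - / 2) * a) with (INR j * a - a / 2) by field.
  rewrite cos_plus, cos_minus. ring.
Qed.

Lemma trig_sums_pos L m : (0 < m < L)%nat ->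
  sum_f_R0 (fun j => cos (INR m * (2 * PI * INR j / INR L))) (pred L) = 0 /\
  sum_f_R0 (fun j => sin (INR m * (2 * PI * INR j / INR L))) (pred L) = 0.
Proof.
  intro Hm.
  assert (HL : 0 < INR L) by (apply lt_0_INR; lia).
  assert (HmL : INR m < INR L) by (apply lt_INR; lia).
  assert (Hm0 : 0 < INR m) by (apply lt_0_INR; lia).
  set (a := 2 * PI * INR m / INR L).
  assert (Hs : 0 < sin (a / 2)).
  { apply sin_gt_0; unfold a.
    - apply Rmult_lt_0_compat; [|lra]. apply Rdiv_lt_0_compat; [|lra]. pose proof PI_RGT_0. nra.
    - replace (2 * PI * INR m / INR L / 2) with (PI * (INR m / INR L)) by (field; lra).
      pose proof PI_RGT_0. assert (INR m / INR L < 1).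
      { apply Rmult_lt_reg_r with (INR L); [lra|]. unfold Rdiv. rewrite Rmult_assoc, Rinv_l by lra. lra. }
      nra. }
  assert (Hper : INR L * a = 2 * INR m * PI) by (unfold a; field; lra).
  assert (E : forall j, INR m * (2 * PI * INR j / INR L) = INR j * a) by (intro; unfold a; field; lra).
  rewrite !(sum_eq _ _ (pred L) (fun j _ => f_equal _ (E j))).
  split.
  - apply Rmult_eq_reg_l with (2 * sin (a / 2)); [|lra].
    rewrite Rmult_0_r, scal_sum.
    rewrite (sum_eq _ (fun j => sin ((INR (S j) - /2) * a) - sin ((INR j - /2) * a)))
      by (intros; rewrite <- tele_sin; ring).
    rewrite (sum_tele (fun j => sin ((INR j - /2) * a))).
    replace (S (pred L)) with L by lia.
    replace ((INR L - / 2) * a) with (- (a/2) + 2 * INR m * PI) by lra.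
    rewrite sin_period. simpl INR. replace ((0 - / 2) * a) with (- (a/2)) by field. ring.
  - apply Rmult_eq_reg_l with (2 * sin (a / 2)); [|lra].
    rewrite Rmult_0_r, scal_sum.
    rewrite (sum_eq _ (fun j => - (cos ((INR (S j) - /2) * a) - cos ((INR j - /2) * a))))
      by (intros; rewrite <- tele_cos; ring).
    rewrite (sum_eq _ (fun j => (- cos ((INR (S j) - /2) * a)) - (- cos ((INR j - /2) * a))))
      by (intros; ring).
    rewrite (sum_tele (fun j => - cos ((INR j - /2) * a))).
    replace (S (pred L)) with L by lia.
    replace ((INR L - / 2) * a) with (- (a/2) + 2 * INR m * PI) by lra.
    rewrite cos_period. simpl INR. replace ((0 - / 2) * a) with (- (a/2)) by field. ring.
Qed.

Definition isZ (f : R) := exists z, f = IZR z.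

Lemma isZ_INR m : isZ (INR m).
Proof. exists (Z.of_nat m). apply INR_IZR_INZ. Qed.
Lemma isZ_plus f g : isZ f -> isZ g -> isZ (f + g).
Proof. intros [a ->] [b ->]. exists (a + b)%Z. rewrite plus_IZR; reflexivity. Qed.
Lemma isZ_minus f g : isZ f -> isZ g -> isZ (f - g).
Proof. intros [a ->] [b ->]. exists (a - b)%Z. rewrite minus_IZR; reflexivity. Qed.
Lemma isZ_opp f : isZ f -> isZ (- f).
Proof. intros [a ->]. exists (- a)%Z. rewrite opp_IZR; reflexivity. Qed.

Lemma isZ_cases f : isZ f -> f = 0 \/ (exists m, (0 < m)%nat /\ f = INR m) \/ (exists m, (0 < m)%nat /\ f = - INR m).
Proof.
  intros [z ->]. destruct z.
  - left; reflexivity.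
  - right; left. exists (Pos.to_nat p). split. lia. rewrite INR_IZR_INZ. f_equal. lia.
  - right; right. exists (Pos.to_nat p). split. lia. rewrite INR_IZR_INZ, <- opp_IZR. f_equal. lia.
Qed.

Lemma base_avg L f : (1 <= L)%nat -> isZ f -> Rabs f < INR L ->
  Avg L (fun t => sin (f * t)) = 0 /\ Avg L (fun t => cos (f * t)) = (if Req_EM_T f 0 then 1 else 0).
Proof.
  intros HL Hf Hfl. destruct (isZ_cases f Hf) as [H0|[[m [Hm ->]]|[m [Hm ->]]]].
  - subst f. destruct (Req_EM_T 0 0) as [_|]; [|lra]. split.
    + rewrite (Avg_ext L _ (fun _ => 0)) by (intro; rewrite Rmult_0_l, sin_0; reflexivity). apply Avg_const; auto.
    + rewrite (Avg_ext L _ (fun _ => 1)) by (intro; rewrite Rmult_0_l, cos_0; reflexivity). apply Avg_const; auto.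
  - assert (Hm0 : 0 < INR m) by (apply lt_0_INR; lia).
    destruct (Req_EM_T (INR m) 0); [lra|].
    rewrite Rabs_right in Hfl by lra. apply INR_lt in Hfl.
    destruct (trig_sums_pos L m ltac:(lia)) as [H1 H2]. unfold Avg. rewrite H1, H2. unfold Rdiv; split; ring.
  - assert (Hm0 : 0 < INR m) by (apply lt_0_INR; lia).
    destruct (Req_EM_T (- INR m) 0); [lra|].
    rewrite Rabs_Ropp, Rabs_right in Hfl by lra. apply INR_lt in Hfl.
    destruct (trig_sums_pos L m ltac:(lia)) as [H1 H2]. unfold Avg.
    rewrite (sum_eq _ (fun j => sin (INR m * (2 * PI * INR j / INR L)) * -1))
      by (intros; rewrite Ropp_mult_distr_l_reverse, sin_neg; ring).
    rewrite (sum_eq (fun j => cos (- INR m * (2 * PI * INR j / INR L))) (fun j => cos (INR m * (2 * PI * INR j / INR L))))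
      by (intros; rewrite Ropp_mult_distr_l_reverse, cos_neg; reflexivity).
    rewrite <- scal_sum. rewrite H1, H2. unfold Rdiv; split; ring.
Qed.

Lemma abs_pm f N : 0 <= N ->
  Rabs f - N <= Rabs (f + N) <= Rabs f + N /\ Rabs f - N <= Rabs (f - N) <= Rabs f + N.
Proof. intro H. unfold Rabs. repeat destruct Rcase_abs; lra. Qed.

Lemma alpha_id a c : let nb := sqrt (a ^ 2 + c ^ 2) in
  a * (a / nb / 2) - c * (- c / nb / 2) = nb / 2.
Proof.
  intro nb. destruct (Req_dec nb 0) as [H|H].
  - assert (Ha : a ^ 2 + c ^ 2 = 0).
    { assert (0 <= a ^ 2 + c ^ 2) by (pose proof (pow2_ge_0 a); pose proof (pow2_ge_0 c); lra).
      rewrite <- (sqrt_sqrt (a ^ 2 + c ^ 2)) by auto. fold nb. rewrite H. ring. }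
    assert (a = 0) by (pose proof (pow2_ge_0 a); pose proof (pow2_ge_0 c); nra).
    assert (c = 0) by (pose proof (pow2_ge_0 a); pose proof (pow2_ge_0 c); nra).
    subst. rewrite H. unfold Rdiv. ring.
  - assert (Hn : nb * nb = a ^ 2 + c ^ 2) by (apply sqrt_sqrt; pose proof (pow2_ge_0 a); pose proof (pow2_ge_0 c); lra).
    field_simplify; [|exact H]. rewrite <- Hn. field. exact H.
Qed.

Lemma fac_nonneg al be x y : al * al + be * be <= 1 -> x ^ 2 + y ^ 2 = 1 -> 0 <= 1 + al * x + be * y.
Proof.
  intros H Hxy. pose proof (CS_le (- al) (- be) x y ltac:(lra)) as Hc. rewrite Hxy, sqrt_1 in Hc. lra.
Qed.

Lemma albe_le a c : let nb := sqrt (a ^ 2 + c ^ 2) in (a / nb) * (a / nb) + (- c / nb) * (- c / nb) <= 1.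
Proof.
  intro nb. destruct (Req_dec nb 0) as [H|H].
  - rewrite H. unfold Rdiv. rewrite Rinv_0. lra.
  - assert (Hn : nb * nb = a ^ 2 + c ^ 2) by (apply sqrt_sqrt; pose proof (pow2_ge_0 a); pose proof (pow2_ge_0 c); lra).
    right. field_simplify; [|exact H]. rewrite <- Hn. field. exact H.
Qed.

Fixpoint rsum (g : nat -> R) (t : nat) : R :=
  match t with O => 0 | S t' => rsum g t' + g t' end.

Lemma zero_below (v : nat -> R) p K : (K < p)%nat ->
  sum_f_R0 (fun k => if Nat.eqb k p then v k else 0) K = 0.
Proof.
  intro H. induction K.
  - destruct p; [lia| reflexivity].
  - rewrite tech5, IHK by lia. destruct (Nat.eqb_spec (S K) p); [lia| ring].
Qed.

Lemma single_term (v : nat -> R) p K : (p <= K)%nat ->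
  sum_f_R0 (fun k => if Nat.eqb k p then v k else 0) K = v p.
Proof.
  intro H. induction H.
  - destruct p. simpl. reflexivity.
    rewrite tech5, Nat.eqb_refl, zero_below by lia. ring.
  - rewrite tech5, IHle. destruct (Nat.eqb_spec (S m) p); [lia| ring].
Qed.

Section Riesz.
Variables (n : nat -> nat) (ar ai : nat -> R) (kk : nat -> nat) (L : nat).
Hypothesis HL : (1 <= L)%nat.

Definition Nf i := INR (n (kk i)).
Definition al i := ar (n (kk i)) / nb n ar ai (kk i).
Definition be i := - ai (n (kk i)) / nb n ar ai (kk i).
Definition fac i th := 1 + al i * cos (Nf i * th) + be i * sin (Nf i * th).
Fixpoint P t th := match t with O => 1 | S t' => P t' th * fac t' th end.
Fixpoint Ts t := match t with O => 0 | S t' => Ts t' + Nf t' end.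
Definition cc t f := Avg L (fun th => cos (f * th) * P t th).
Definition ss t f := Avg L (fun th => sin (f * th) * P t th).

Lemma Nf_nonneg i : 0 <= Nf i.
Proof. apply pos_INR. Qed.

Lemma P_nonneg t th : 0 <= P t th.
Proof.
  induction t. simpl; lra. simpl. apply Rmult_le_pos; auto.
  unfold fac. apply fac_nonneg. unfold al, be, nb. apply albe_le.
  pose proof (sin2_cos2 (Nf t * th)). unfold Rsqr in H. lra.
Qed.

Lemma Avg5 F1 F2 F3 F4 F5 c2 c3 c4 c5 :
  Avg L (fun t => F1 t + c2 * F2 t + c3 * F3 t + c4 * F4 t + c5 * F5 t) =
  Avg L F1 + c2 * Avg L F2 + c3 * Avg L F3 + c4 * Avg L F4 + c5 * Avg L F5.
Proof.
  rewrite (Avg_plus L (fun t => F1 t + c2 * F2 t + c3 * F3 t + c4 * F4 t) (fun t => c5 * F5 t)).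
  rewrite (Avg_plus L (fun t => F1 t + c2 * F2 t + c3 * F3 t) (fun t => c4 * F4 t)).
  rewrite (Avg_plus L (fun t => F1 t + c2 * F2 t) (fun t => c3 * F3 t)).
  rewrite (Avg_plus L F1 (fun t => c2 * F2 t)).
  rewrite !Avg_scal. reflexivity.
Qed.

Lemma rec_cc t f : cc (S t) f = cc t f + al t / 2 * cc t (f - Nf t) + al t / 2 * cc t (f + Nf t)
  + be t / 2 * ss t (f + Nf t) + (- (be t / 2)) * ss t (f - Nf t).
Proof.
  unfold cc, ss. rewrite <- Avg5. apply Avg_ext. intro th. simpl P. unfold fac.
  rewrite !Rmult_minus_distr_r, !Rmult_plus_distr_r, cos_minus, cos_plus, sin_plus, sin_minus. field.
Qed.

Lemma rec_ss t f : ss (S t) f = ss t f + al t / 2 * ss t (f + Nf t) + al t / 2 * ss t (f - Nf t)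
  + be t / 2 * cc t (f - Nf t) + (- (be t / 2)) * cc t (f + Nf t).
Proof.
  unfold cc, ss. rewrite <- Avg5. apply Avg_ext. intro th. simpl P. unfold fac.
  rewrite !Rmult_minus_distr_r, !Rmult_plus_distr_r, cos_minus, cos_plus, sin_plus, sin_minus. field.
Qed.

Lemma isZ_Nf i : isZ (Nf i).
Proof. apply isZ_INR. Qed.

Lemma support t : forall f, isZ f -> Ts t < Rabs f -> Rabs f + Ts t < INR L -> cc t f = 0 /\ ss t f = 0.
Proof.
  induction t; intros f Hf H1 H2.
  - simpl Ts in *. unfold cc, ss. simpl P.
    destruct (base_avg L f HL Hf ltac:(lra)) as [B1 B2].
    rewrite (Avg_ext L (fun th => sin (f * th) * 1) (fun th => sin (f * th))) by (intro; ring).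
    rewrite (Avg_ext L (fun th => cos (f * th) * 1) (fun th => cos (f * th))) by (intro; ring).
    rewrite B1, B2. destruct (Req_EM_T f 0); [subst; rewrite Rabs_R0 in H1; lra| split; reflexivity].
  - simpl Ts in *. pose proof (Nf_nonneg t) as HN.
    destruct (abs_pm f (Nf t) HN) as [[A1 A2] [A3 A4]].
    destruct (IHt f Hf ltac:(lra) ltac:(lra)) as [E1 E2].
    destruct (IHt (f - Nf t) ltac:(apply isZ_minus; auto; apply isZ_Nf) ltac:(lra) ltac:(lra)) as [E3 E4].
    destruct (IHt (f + Nf t) ltac:(apply isZ_plus; auto; apply isZ_Nf) ltac:(lra) ltac:(lra)) as [E5 E6].
    rewrite rec_cc, rec_ss, E1, E2, E3, E4, E5, E6. split; ring.
Qed.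

Lemma zero_cc t : (forall i, (i < t)%nat -> Ts i < Nf i /\ Nf i + Ts i < INR L) -> cc t 0 = 1.
Proof.
  induction t; intro H.
  - unfold cc. simpl P. rewrite (Avg_ext L _ (fun _ => 1)) by (intro; rewrite Rmult_0_l, cos_0; ring).
    apply Avg_const; auto.
  - destruct (H t (Nat.lt_succ_diag_r t)) as [H1 H2]. pose proof (Nf_nonneg t).
    rewrite rec_cc, IHt by (intros; apply H; lia).
    rewrite Rminus_0_l, Rplus_0_l.
    destruct (support t (- Nf t) ltac:(apply isZ_opp, isZ_Nf) ltac:(rewrite Rabs_Ropp, Rabs_right; lra)
      ltac:(rewrite Rabs_Ropp, Rabs_right; lra)) as [E1 E2].
    destruct (support t (Nf t) ltac:(apply isZ_Nf) ltac:(rewrite Rabs_right; lra)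
      ltac:(rewrite Rabs_right; lra)) as [E3 E4].
    rewrite E1, E2, E3, E4. ring.
Qed.

Definition X t k := ar (n k) * cc t (INR (n k)) - ai (n k) * ss t (INR (n k)).

Lemma X_step t k (Bnd : R) :
  (forall i, (i <= t)%nat -> Ts i < Nf i /\ 2 * Nf i + Ts i < INR L) ->
  (forall k', k' <> kk t -> Ts t < Rabs (INR (n k') - Nf t)) ->
  INR (n k) + Nf t + Ts t < INR L ->
  X (S t) k = X t k + (if Nat.eqb k (kk t) then nb n ar ai k / 2 else 0).
Proof.
  intros Hb Hsep Hk. pose proof (Nf_nonneg t) as HN. pose proof (pos_INR (n k)) as Hn.
  destruct (Hb t (le_n t)) as [Ht1 Ht2].
  unfold X. rewrite rec_cc, rec_ss.
  destruct (Nat.eqb_spec k (kk t)) as [Hkt|Hkt].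
  - subst k. fold (Nf t).
    replace (Nf t - Nf t) with 0 by ring. replace (Nf t + Nf t) with (2 * Nf t) by ring.
    assert (Z0 : cc t 0 = 1) by (apply zero_cc; intros i Hi; destruct (Hb i ltac:(lia)); pose proof (Nf_nonneg i); lra).
    assert (Z1 : ss t 0 = 0).
    { unfold ss. rewrite (Avg_ext L _ (fun _ => 0 * 1)) by (intro; rewrite Rmult_0_l, sin_0; ring).
      rewrite Avg_const; auto; ring. }
    destruct (support t (Nf t) ltac:(apply isZ_Nf) ltac:(rewrite Rabs_right; lra)
      ltac:(rewrite Rabs_right; lra)) as [E1 E2].
    destruct (support t (2 * Nf t) ltac:(replace (2 * Nf t) with (Nf t + Nf t) by ring; apply isZ_plus; apply isZ_Nf)
      ltac:(rewrite Rabs_right; lra) ltac:(rewrite Rabs_right; lra)) as [E3 E4].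
    rewrite Z0, Z1, E1, E2, E3, E4.
    pose proof (alpha_id (ar (n (kk t))) (ai (n (kk t)))) as Ha. cbv zeta in Ha.
    unfold al, be, nb. rewrite <- Ha. ring.
  - pose proof (Hsep k Hkt) as Hs.
    destruct (abs_pm (INR (n k)) (Nf t) HN) as [[A1 A2] [A3 A4]].
    rewrite (Rabs_right (INR (n k))) in A1, A2, A3, A4 by lra.
    destruct (support t (INR (n k) - Nf t) ltac:(apply isZ_minus; [apply isZ_INR| apply isZ_Nf])
      Hs ltac:(lra)) as [E1 E2].
    destruct (support t (INR (n k) + Nf t) ltac:(apply isZ_plus; [apply isZ_INR| apply isZ_Nf])
      ltac:(rewrite Rabs_right; lra) ltac:(rewrite Rabs_right; lra)) as [E3 E4].
    rewrite E1, E2, E3, E4. ring.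
Qed.

Lemma X_zero k : 0 < INR (n k) -> INR (n k) < INR L -> X 0 k = 0.
Proof.
  intros H1 H2. unfold X, cc, ss. simpl P.
  destruct (base_avg L (INR (n k)) HL (isZ_INR _) ltac:(rewrite Rabs_right; lra)) as [B1 B2].
  rewrite (Avg_ext L (fun th => sin (INR (n k) * th) * 1) (fun th => sin (INR (n k) * th))) by (intro; ring).
  rewrite (Avg_ext L (fun th => cos (INR (n k) * th) * 1) (fun th => cos (INR (n k) * th))) by (intro; ring).
  rewrite B1, B2. destruct (Req_EM_T (INR (n k)) 0); [lra| ring].
Qed.


Lemma sumX (W : nat -> R) K tmax :
  (forall i, (i <= tmax)%nat -> Ts i < Nf i /\ 2 * Nf i + Ts i < INR L) ->
  (forall i k', k' <> kk i -> Ts i < Rabs (INR (n k') - Nf i)) ->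
  (forall i, (i < tmax)%nat -> (kk i <= K)%nat) ->
  (forall k i, (k <= K)%nat -> (i < tmax)%nat -> INR (n k) + Nf i + Ts i < INR L) ->
  (forall k, (k <= K)%nat -> 0 < INR (n k) < INR L) ->
  forall t, (t <= tmax)%nat ->
  sum_f_R0 (fun k => W k * X t k) K = rsum (fun i => W (kk i) * (nb n ar ai (kk i) / 2)) t.
Proof.
  intros Hb Hsep Hkk HK Hpos t. induction t; intro Ht.
  - simpl. rewrite (sum_eq _ (fun _ => 0)). rewrite sum_cte; ring.
    intros k Hk. destruct (Hpos k Hk). rewrite X_zero; auto; ring.
  - simpl rsum. rewrite <- IHt by lia.
    rewrite (sum_eq _ (fun k => W k * X t k + (if Nat.eqb k (kk t) then W k * (nb n ar ai k / 2) else 0))).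
    + rewrite plus_sum. f_equal. apply (single_term (fun k => W k * (nb n ar ai k / 2))). apply Hkk; lia.
    + intros k Hk. rewrite (X_step t k 0).
      * destruct (Nat.eqb k (kk t)); ring.
      * intros i Hi. apply Hb; lia.
      * intros k' Hk'. apply Hsep; auto.
      * apply HK; auto; lia.
Qed.

Lemma avg_RK (W : nat -> R) K t :
  Avg L (fun th => sum_f_R0 (fun k => W k * (ar (n k) * cos (INR (n k) * th) - ai (n k) * sin (INR (n k) * th))) K * P t th)
  = sum_f_R0 (fun k => W k * X t k) K.
Proof.
  rewrite (Avg_ext L _ (fun th => sum_f_R0 (fun k => (W k * ar (n k)) * (cos (INR (n k) * th) * P t th)
                                   + (- (W k * ai (n k))) * (sin (INR (n k) * th) * P t th)) K)).
  - rewrite (Avg_sum L (fun k th => (W k * ar (n k)) * (cos (INR (n k) * th) * P t th)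
                                   + (- (W k * ai (n k))) * (sin (INR (n k) * th) * P t th)) K).
    apply sum_eq. intros k _.
    rewrite (Avg_plus L (fun th => (W k * ar (n k)) * (cos (INR (n k) * th) * P t th))
                        (fun th => (- (W k * ai (n k))) * (sin (INR (n k) * th) * P t th))).
    rewrite !Avg_scal. unfold X, cc, ss. ring.
  - intro th. rewrite Rmult_comm, scal_sum. apply sum_eq. intros; ring.
Qed.

Lemma riesz_bound (W : nat -> R) K tmax Mx :
  (forall i, (i <= tmax)%nat -> Ts i < Nf i /\ 2 * Nf i + Ts i < INR L) ->
  (forall i k', k' <> kk i -> Ts i < Rabs (INR (n k') - Nf i)) ->
  (forall i, (i < tmax)%nat -> (kk i <= K)%nat) ->
  (forall k i, (k <= K)%nat -> (i < tmax)%nat -> INR (n k) + Nf i + Ts i < INR L) ->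
  (forall k, (k <= K)%nat -> 0 < INR (n k) < INR L) ->
  (forall th, sum_f_R0 (fun k => W k * (ar (n k) * cos (INR (n k) * th) - ai (n k) * sin (INR (n k) * th))) K <= Mx) ->
  rsum (fun i => W (kk i) * (nb n ar ai (kk i) / 2)) tmax <= Mx.
Proof.
  intros Hb Hsep Hkk HK Hpos HM.
  rewrite <- (sumX W K tmax Hb Hsep Hkk HK Hpos tmax (le_n _)).
  rewrite <- avg_RK.
  apply Rle_trans with (Avg L (fun th => Mx * P tmax th)).
  - apply Avg_le; auto. intro th. apply Rmult_le_compat_r; [apply P_nonneg| apply HM].
  - rewrite Avg_scal.
    assert (H0 : Avg L (P tmax) = 1).
    { rewrite <- (zero_cc tmax). unfold cc. apply Avg_ext. intro; rewrite Rmult_0_l, cos_0; ring.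
      intros i Hi. destruct (Hb i ltac:(lia)). pose proof (Nf_nonneg i). lra. }
    rewrite H0. lra.
Qed.

End Riesz.

Lemma nat_arch x : exists m : nat, x < INR m.
Proof.
  destruct (archimed (Rabs x)) as [H1 _].
  assert (Hz : (0 <= up (Rabs x))%Z).
  { assert (0 <= Rabs x) by apply Rabs_pos. apply le_IZR. lra. }
  exists (Z.to_nat (up (Rabs x))).
  rewrite INR_IZR_INZ, Z2Nat.id by exact Hz. pose proof (Rle_abs x). lra.
Qed.

Lemma eps_le a b : (forall eps, eps > 0 -> a <= b + eps) -> a <= b.
Proof.
  intro H. destruct (Rle_dec a b) as [|Hn]; auto. exfalso.
  specialize (H ((a - b) / 2) ltac:(lra)). lra.
Qed.

Lemma rsum_sum (g : nat -> R) N : sum_f_R0 g N = rsum g (S N).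
Proof. induction N. simpl; ring. simpl in *. rewrite IHN. ring. Qed.

Lemma rsum_split (g : nat -> R) a b : rsum g (a + b) = rsum g a + rsum (fun j => g (a + j)%nat) b.
Proof. induction b. simpl. rewrite Nat.add_0_r; ring. rewrite Nat.add_succ_r. simpl. rewrite IHb. ring. Qed.

Lemma rsum_plus (f g : nat -> R) t : rsum (fun i => f i + g i) t = rsum f t + rsum g t.
Proof. induction t. simpl; ring. simpl. rewrite IHt. ring. Qed.

Lemma rsum_ext (f g : nat -> R) t : (forall i, (i < t)%nat -> f i = g i) -> rsum f t = rsum g t.
Proof. intro H. induction t. reflexivity. simpl. rewrite IHt by (intros; apply H; lia). rewrite H by lia. reflexivity. Qed.

Lemma rsum_le (f g : nat -> R) t : (forall i, (i < t)%nat -> f i <= g i) -> rsum f t <= rsum g t.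
Proof. intro H. induction t. simpl; lra. simpl. pose proof (H t ltac:(lia)). assert (rsum f t <= rsum g t) by (apply IHt; intros; apply H; lia). lra. Qed.

Lemma rsum_const c t : rsum (fun _ => c) t = INR t * c.
Proof. induction t. simpl; ring. simpl rsum. rewrite IHt, S_INR. ring. Qed.

Lemma rsum_grow (g : nat -> R) a b : (forall i, 0 <= g i) -> (a <= b)%nat -> rsum g a <= rsum g b.
Proof. intros Hg H. induction H. lra. simpl. pose proof (Hg m). lra. Qed.

Lemma rsum_classes (w : nat -> R) q m :
  rsum w (q * m) = rsum (fun j => rsum (fun i => w (j + i * q)%nat) m) q.
Proof.
  induction m.
  - rewrite Nat.mul_0_r. simpl. rewrite rsum_const. ring.
  - replace (q * S m)%nat with (q * m + q)%nat by lia. rewrite rsum_split, IHm.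
    rewrite <- rsum_plus. apply rsum_ext. intros j Hj. simpl. f_equal. f_equal. lia.
Qed.

Lemma bern2 d N : 0 <= d <= 1 -> 1 - INR N * d <= (1 - d) ^ N.
Proof.
  intro Hd. induction N. simpl; lra.
  rewrite S_INR. simpl. pose proof (pos_INR N).
  destruct (Rle_dec 0 (1 - INR N * d)).
  - nra.
  - pose proof (pow_le (1 - d) N ltac:(lra)). nra.
Qed.

Section Classes.
Variables (lam : R) (n : nat -> nat).
Hypothesis lam_gt1 : lam > 1.
Hypothesis n_pos : (1 <= n 0)%nat.
Hypothesis n_gap : forall k, INR (n (S k)) >= lam * INR (n k).

Lemma gap_iter k m : INR (n (k + m)) >= lam ^ m * INR (n k).
Proof.
  induction m. rewrite Nat.add_0_r. simpl; lra.
  rewrite Nat.add_succ_r. pose proof (n_gap (k + m)). simpl.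
  assert (0 < lam ^ m) by (apply pow_lt; lra). pose proof (pos_INR (n k)). nra.
Qed.

Lemma n_INR_mono k k' : (k <= k')%nat -> INR (n k) <= INR (n k').
Proof.
  intro H. destruct (Nat.eq_dec k k'). subst; lra.
  apply le_INR. pose proof (n_mono lam n lam_gt1 n_pos n_gap k k' ltac:(lia)). lia.
Qed.

Lemma choose_q : exists q : nat, (1 <= q)%nat /\ (lam ^ q - 1) * (lam - 1) > lam.
Proof.
  destruct (nat_arch (lam / ((lam - 1) * (lam - 1)))) as [q Hq].
  assert (Hl : 0 < (lam - 1) * (lam - 1)) by nra.
  assert (Hq0 : 0 < INR q).
  { assert (0 < lam / ((lam - 1) * (lam - 1))) by (apply Rdiv_lt_0_compat; lra). lra. }
  exists q. split. { change 0 with (INR 0) in Hq0. apply INR_lt in Hq0. lia. }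
  pose proof (bern (lam - 1) q ltac:(lra)) as Hb. replace (1 + (lam - 1)) with lam in Hb by ring.
  assert (Hq' : lam < INR q * ((lam - 1) * (lam - 1))).
  { apply Rmult_lt_reg_r with (/ ((lam - 1) * (lam - 1))). apply Rinv_0_lt_compat; auto.
    rewrite Rmult_assoc, Rinv_r by lra. unfold Rdiv in Hq. lra. }
  nra.
Qed.

Variables (q j : nat).
Hypothesis q_pos : (1 <= q)%nat.
Hypothesis q_big : (lam ^ q - 1) * (lam - 1) > lam.

Definition kkq i := (j + i * q)%nat.

Lemma rho_gt : lam ^ q - 1 > lam / (lam - 1).
Proof.
  apply Rmult_lt_reg_r with (lam - 1); [lra|]. unfold Rdiv. rewrite Rmult_assoc, Rinv_l by lra. lra.
Qed.

Lemma lam_div_gt1 : lam / (lam - 1) > 1.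
Proof.
  apply Rmult_lt_reg_r with (lam - 1); [lra|]. unfold Rdiv. rewrite Rmult_assoc, Rinv_l by lra. lra.
Qed.

Lemma Nf_ratio i : Nf n kkq (S i) >= lam ^ q * Nf n kkq i.
Proof.
  unfold Nf, kkq. replace (j + S i * q)%nat with ((j + i * q) + q)%nat by lia. apply gap_iter.
Qed.

Lemma Ts_bound i : Ts n kkq i <= Nf n kkq i / (lam ^ q - 1).
Proof.
  pose proof rho_gt. pose proof lam_div_gt1.
  induction i.
  - simpl. unfold Rdiv. apply Rmult_le_pos. apply pos_INR. left; apply Rinv_0_lt_compat; lra.
  - simpl. pose proof (Nf_ratio i). pose proof (Nf_nonneg n kkq i).
    apply Rle_trans with (Nf n kkq i / (lam ^ q - 1) + Nf n kkq i); [lra|].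
    replace (Nf n kkq i / (lam ^ q - 1) + Nf n kkq i) with (lam ^ q * Nf n kkq i / (lam ^ q - 1)) by (field; lra).
    unfold Rdiv. apply Rmult_le_compat_r; [left; apply Rinv_0_lt_compat; lra| lra].
Qed.

Lemma Ts_lt i : Ts n kkq i < Nf n kkq i.
Proof.
  pose proof (Ts_bound i). pose proof rho_gt. pose proof lam_div_gt1.
  assert (HN : 1 <= Nf n kkq i) by apply (n_INR_ge1 lam n lam_gt1 n_pos n_gap).
  assert (Nf n kkq i / (lam ^ q - 1) < Nf n kkq i).
  { apply Rmult_lt_reg_r with (lam ^ q - 1); [lra|]. unfold Rdiv. rewrite Rmult_assoc, Rinv_l by lra. nra. }
  lra.
Qed.

Lemma sep i k' : k' <> kkq i -> Ts n kkq i < Rabs (INR (n k') - Nf n kkq i).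
Proof.
  intro Hk. pose proof (Ts_bound i) as HT. pose proof rho_gt. pose proof lam_div_gt1.
  assert (HN : 1 <= Nf n kkq i) by apply (n_INR_ge1 lam n lam_gt1 n_pos n_gap).
  assert (Hkey : Nf n kkq i / (lam ^ q - 1) < (1 - / lam) * Nf n kkq i).
  { assert (Hr : / (lam ^ q - 1) < 1 - / lam).
    { apply Rmult_lt_reg_r with (lam ^ q - 1); [lra|]. rewrite Rinv_l by lra.
      replace ((1 - / lam) * (lam ^ q - 1)) with ((lam ^ q - 1) * (lam - 1) / lam) by (field; lra).
      apply Rmult_lt_reg_r with lam; [lra|]. unfold Rdiv. rewrite Rmult_assoc, Rinv_l by lra. lra. }
    unfold Rdiv. rewrite Rmult_comm. apply Rmult_lt_compat_r; lra. }
  destruct (Nat.lt_trichotomy k' (kkq i)) as [Hc|[Hc|Hc]]; [|contradiction|].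
  -
    assert (G1 : INR (n (S k')) <= Nf n kkq i) by (unfold Nf; apply n_INR_mono; lia).
    pose proof (n_gap k').
    assert (G2 : INR (n k') <= Nf n kkq i / lam).
    { apply Rmult_le_reg_r with lam; [lra|]. unfold Rdiv. rewrite Rmult_assoc, Rinv_l by lra. lra. }
    rewrite Rabs_left1.
    + replace (Nf n kkq i / lam) with (/ lam * Nf n kkq i) in G2 by (unfold Rdiv; ring). lra.
    + assert (Nf n kkq i / lam <= Nf n kkq i).
      { apply Rmult_le_reg_r with lam; [lra|]. unfold Rdiv. rewrite Rmult_assoc, Rinv_l by lra. nra. }
      lra.
  - assert (G1 : INR (n (S (kkq i))) <= INR (n k')) by (apply n_INR_mono; lia).
    pose proof (n_gap (kkq i)). fold (Nf n kkq i) in *. unfold Nf in *.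
    rewrite Rabs_right by nra.
    assert ((1 - / lam) * INR (n (kkq i)) <= (lam - 1) * INR (n (kkq i))).
    { apply Rmult_le_compat_r. apply pos_INR.
      assert (/ lam < 1) by (rewrite <- Rinv_1; apply Rinv_lt_contravar; lra).
      assert (0 < / lam) by (apply Rinv_0_lt_compat; lra).
      assert (Hv : lam * / lam = 1) by (field; lra).
      assert (0 <= (lam - 1) * (lam - 1)) by nra.
      assert (Hk2 : 2 * lam <= lam * lam + 1) by nra.
      assert (lam * (1 - / lam) <= lam * (lam - 1)) by nra.
      apply Rmult_le_reg_l with lam; lra. }
    nra.
Qed.

End Classes.

Lemma polar_re r th m a c :
  re_term a c (r * cos th) (r * sin th) m = r ^ m * (a * cos (INR m * th) - c * sin (INR m * th)).
Proof. unfold re_term. rewrite cpow_polar. cbn [fst snd]. ring. Qed.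

Lemma polar_norm r th : 0 <= r -> sqrt ((r * cos th) * (r * cos th) + (r * sin th) * (r * sin th)) = r.
Proof.
  intro Hr. replace ((r * cos th) * (r * cos th) + (r * sin th) * (r * sin th)) with (r * r)
    by (pose proof (sin2_cos2 th); unfold Rsqr in H; nra).
  apply sqrt_square; auto.
Qed.

Lemma scal_sum_l (f : nat -> R) c N : sum_f_R0 (fun i => c * f i) N = c * sum_f_R0 f N.
Proof. rewrite scal_sum. apply sum_eq; intros; ring. Qed.

Lemma rsum_scal (f : nat -> R) c t : rsum (fun i => c * f i) t = c * rsum f t.
Proof. induction t. simpl; ring. simpl. rewrite IHt. ring. Qed.

Section Nec.
Variables (lam : R) (n : nat -> nat) (ar ai : nat -> R) (u : R -> R -> R).
Hypothesis lam_gt1 : lam > 1.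
Hypothesis n_pos : (1 <= n 0)%nat.
Hypothesis n_gap : forall k, INR (n (S k)) >= lam * INR (n k).
Hypothesis conv_im : forall x y, x * x + y * y < 1 ->
     exists s, infinite_sum (fun k => im_term (ar (n k)) (ai (n k)) x y (n k)) s.
Hypothesis u_def : forall x y, x * x + y * y < 1 ->
     infinite_sum (fun k => re_term (ar (n k)) (ai (n k)) x y (n k)) (u x y).

Definition wr r k := INR (n k) * nb n ar ai k * r ^ (n k).

Lemma wr_nonneg r k : 0 <= r -> 0 <= wr r k.
Proof.
  intro. unfold wr. pose proof (pos_INR (n k)). pose proof (nb_pos n ar ai k).
  pose proof (pow_le r (n k) H). apply Rmult_le_pos; [apply Rmult_le_pos|]; auto.
Qed.

Lemma re_series x y k : INR (n k) * re_term (ar (n k)) (ai (n k)) x y (n k) =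
  x * dre n ar ai x y k + y * ndim n ar ai x y k.
Proof.
  unfold dre, ndim, re_term, im_term. pose proof (n_ge1 lam n lam_gt1 n_pos n_gap k).
  destruct (n k) as [|m]; [lia|]. simpl pred. rewrite cpow_S. cbn [fst snd]. ring.
Qed.

Lemma class_bound r Mr q j t : 0 < r < 1 -> (1 <= q)%nat -> (lam ^ q - 1) * (lam - 1) > lam ->
  (forall th, sqrt (G1 n ar ai (r * cos th) (r * sin th) * G1 n ar ai (r * cos th) (r * sin th)
                  + G2 n ar ai (r * cos th) (r * sin th) * G2 n ar ai (r * cos th) (r * sin th)) <= Mr) ->
  rsum (fun i => wr r (kkq q j i)) t <= 2 * Mr.
Proof.
  intros Hr Hq Hqb HM.
  assert (HMr : 0 <= Mr) by (pose proof (HM 0); pose proof (sqrt_pos (G1 n ar ai (r * cos 0) (r * sin 0) * G1 n ar ai (r * cos 0) (r * sin 0)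
                  + G2 n ar ai (r * cos 0) (r * sin 0) * G2 n ar ai (r * cos 0) (r * sin 0))); lra).
  destruct (Dr_cv lam n ar ai u lam_gt1 n_pos n_gap conv_im u_def r ltac:(lra)) as [lD HlD].
  assert (Hw : Un_cv (fun N => sum_f_R0 (wr r) N) (r * lD)).
  { intros e He. destruct (cv_scal _ _ r HlD e He) as [N HN]. exists N. intros m Hm.
    rewrite (sum_eq _ (fun k => Dr n ar ai r k * r)). rewrite <- scal_sum. apply HN; auto.
    intros k _. unfold wr, Dr. pose proof (n_ge1 lam n lam_gt1 n_pos n_gap k).
    destruct (n k) as [|mm]; [lia|]. simpl pred. rewrite <- tech_pow_Rmult. ring. }
  apply eps_le. intros eps Heps.
  destruct (Hw (eps / 2) ltac:(lra)) as [K0 HK0].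
  set (K := (K0 + j + t * q)%nat).
  assert (Htail : r * lD - sum_f_R0 (wr r) K < eps / 2).
  { specialize (HK0 K ltac:(unfold K; lia)). unfold Rdist in HK0. apply Rabs_def2 in HK0. lra. }
  set (L := (3 * n K + 1)%nat).
  assert (HLR : INR L = 3 * INR (n K) + 1).
  { unfold L. rewrite plus_INR, mult_INR. simpl (INR 1). replace (INR 3) with 3 by (simpl; ring). ring. }
  set (W := fun k => INR (n k) * r ^ (n k)).
  assert (HnK : forall k, (k <= K)%nat -> INR (n k) <= INR (n K)).
  { intros k Hk. apply (n_INR_mono lam n lam_gt1 n_pos n_gap). auto. }
  assert (Hkk : forall i, (i <= t)%nat -> (kkq q j i <= K)%nat).
  { intros i Hi. unfold kkq, K. nia. }
  pose proof (n_INR_ge1 lam n lam_gt1 n_pos n_gap K) as HK1.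
  assert (Hmain : rsum (fun i => W (kkq q j i) * (nb n ar ai (kkq q j i) / 2)) t <= Mr + eps / 2).
  { apply (riesz_bound n ar ai (kkq q j) L ltac:(unfold L; lia) W K t).
    - intros i Hi. pose proof (Ts_lt lam n lam_gt1 n_pos n_gap q j Hq Hqb i).
      split; auto. pose proof (HnK _ (Hkk i Hi)). unfold Nf in *. rewrite HLR. lra.
    - intros i k' Hk'. apply (sep lam n lam_gt1 n_pos n_gap q j Hq Hqb i k' Hk').
    - intros i Hi. apply Hkk; lia.
    - intros k i Hk Hi. pose proof (Ts_lt lam n lam_gt1 n_pos n_gap q j Hq Hqb i).
      pose proof (HnK _ (Hkk i ltac:(lia))). pose proof (HnK k Hk). unfold Nf in *. rewrite HLR. lra.
    - intros k Hk. pose proof (n_INR_ge1 lam n lam_gt1 n_pos n_gap k). pose proof (HnK k Hk).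
      rewrite HLR. lra.
    - intro th. set (x := r * cos th). set (y := r * sin th).
      assert (Hxy : x * x + y * y < 1).
      { unfold x, y. replace ((r * cos th) * (r * cos th) + (r * sin th) * (r * sin th)) with (r * r)
          by (pose proof (sin2_cos2 th); unfold Rsqr in H; nra). nra. }
      assert (Hs : sqrt (x * x + y * y) = r) by (apply polar_norm; lra).
      destruct (G_cv lam n ar ai u lam_gt1 n_pos n_gap conv_im u_def x y Hxy) as [C1 C2].
      assert (HE : Un_cv (fun N => sum_f_R0 (fun k => INR (n k) * re_term (ar (n k)) (ai (n k)) x y (n k)) N)
                    (x * G1 n ar ai x y + y * G2 n ar ai x y)).
      { intros e He. destruct (CV_plus _ _ _ _ (cv_scal _ _ x C1) (cv_scal _ _ y C2) e He) as [N HN].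
        exists N. intros m Hm. rewrite (sum_eq _ (fun k => x * dre n ar ai x y k + y * ndim n ar ai x y k))
          by (intros; apply re_series).
        rewrite plus_sum, !scal_sum_l. apply HN; auto. }
      assert (Hbd : forall k, Rabs (INR (n k) * re_term (ar (n k)) (ai (n k)) x y (n k)) <= wr r k).
      { intro k. destruct (term_bound (ar (n k)) (ai (n k)) x y (n k) r ltac:(lra)) as [T1 _].
        rewrite Rabs_mult, Rabs_right by (apply Rle_ge, pos_INR). unfold wr, nb.
        rewrite Rmult_assoc. apply Rmult_le_compat_l; [apply pos_INR| exact T1]. }
      pose proof (tail_bound _ _ _ _ K Hbd HE Hw) as Htb.
      assert (HEle : x * G1 n ar ai x y + y * G2 n ar ai x y <= Mr).
      { unfold x, y.
        replace (r * cos th * G1 n ar ai (r * cos th) (r * sin th) + r * sin th * G2 n ar ai (r * cos th) (r * sin th))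
          with (r * (cos th * G1 n ar ai (r * cos th) (r * sin th) + sin th * G2 n ar ai (r * cos th) (r * sin th))) by ring.
        pose proof (CS_le (cos th) (sin th) (G1 n ar ai (r * cos th) (r * sin th)) (G2 n ar ai (r * cos th) (r * sin th))
          ltac:(pose proof (sin2_cos2 th); unfold Rsqr in H; lra)) as Hcs.
        replace (G1 n ar ai (r * cos th) (r * sin th) ^ 2 + G2 n ar ai (r * cos th) (r * sin th) ^ 2)
          with (G1 n ar ai (r * cos th) (r * sin th) * G1 n ar ai (r * cos th) (r * sin th)
                  + G2 n ar ai (r * cos th) (r * sin th) * G2 n ar ai (r * cos th) (r * sin th)) in Hcs by ring.
        pose proof (HM th). 
        apply Rle_trans with (r * Mr); [apply Rmult_le_compat_l; lra| nra]. }
      rewrite (sum_eq _ (fun k => INR (n k) * re_term (ar (n k)) (ai (n k)) x y (n k))).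
      + apply Rabs_def2' in Htb. lra.
      + intros k _. unfold W, x, y. rewrite polar_re. ring. }
  rewrite (rsum_ext _ (fun i => 2 * (W (kkq q j i) * (nb n ar ai (kkq q j i) / 2)))).
  - rewrite rsum_scal. lra.
  - intros i _. unfold wr, W. field.
Qed.

Lemma nec_main (mu : R -> R) (B : R)
  (mu_pos : forall r, 0 <= r < 1 -> 0 < mu r)
  (B_pos : B > 0)
  (mu_doub : forall d, 0 < d <= 1 -> mu (1 - d / 2) >= B * mu (1 - d)) :
  in_Bloch_mu mu u ->
  exists C : R, forall N : nat, (1 <= N)%nat ->
    sum_f_R0 (fun k => if Nat.leb (n k) N
                       then INR (n k) * sqrt (ar (n k) ^ 2 + ai (n k) ^ 2)
                       else 0) N
    <= C / mu (1 - 1 / INR N).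
Proof.
  intro HB. apply (bloch_iff lam n ar ai u lam_gt1 n_pos n_gap conv_im u_def mu) in HB.
  destruct HB as [M HM].
  assert (HM0 : 0 <= M).
  { specialize (HM 0 0 ltac:(lra)). replace (0 * 0 + 0 * 0) with 0 in HM by ring.
    rewrite sqrt_0 in HM. pose proof (mu_pos 0 ltac:(lra)). pose proof (Rabs_pos (u 0 0)).
    pose proof (sqrt_pos (G1 n ar ai 0 0 * G1 n ar ai 0 0 + G2 n ar ai 0 0 * G2 n ar ai 0 0)). nra. }
  destruct (choose_q lam n lam_gt1 n_pos) as [q [Hq Hqb]].
  exists (4 * INR q * M / B). intros N HN.
  assert (HNR : 1 <= INR N) by (apply (le_INR 1); auto).
  set (d := 1 / (2 * INR N)).
  assert (Hd : 0 < d <= 1 / 2).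
  { unfold d. split. apply Rdiv_lt_0_compat; lra.
    apply Rmult_le_reg_r with (2 * INR N); [lra|]. unfold Rdiv. rewrite Rmult_assoc, Rinv_l by lra. lra. }
  set (r := 1 - d).
  assert (Hr : 0 < r < 1) by (unfold r; lra).
  assert (Hmur : 0 < mu r) by (apply mu_pos; lra).
  assert (Hdb : mu r >= B * mu (1 - 1 / INR N)).
  { assert (Hd1 : 0 < 1 / INR N <= 1).
    { split. apply Rdiv_lt_0_compat; lra. apply Rmult_le_reg_r with (INR N); [lra|].
      unfold Rdiv. rewrite Rmult_assoc, Rinv_l by lra. lra. }
    pose proof (mu_doub _ Hd1). replace (1 - 1 / INR N / 2) with r in H by (unfold r, d; field; lra). exact H. }
  assert (Hmu1 : 0 < mu (1 - 1 / INR N)).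
  { apply mu_pos. split; [|assert (0 < 1 / INR N) by (apply Rdiv_lt_0_compat; lra); lra].
    apply Rmult_le_reg_r with (INR N); [lra|]. unfold Rdiv. rewrite Rmult_minus_distr_r, Rmult_assoc, Rinv_l by lra. lra. }
  assert (HMr : forall th, sqrt (G1 n ar ai (r * cos th) (r * sin th) * G1 n ar ai (r * cos th) (r * sin th)
                  + G2 n ar ai (r * cos th) (r * sin th) * G2 n ar ai (r * cos th) (r * sin th)) <= M / mu r).
  { intro th. 
    assert (Hxy : (r * cos th) * (r * cos th) + (r * sin th) * (r * sin th) < 1).
    { replace ((r * cos th) * (r * cos th) + (r * sin th) * (r * sin th)) with (r * r)
        by (pose proof (sin2_cos2 th); unfold Rsqr in H; nra). nra. }
    specialize (HM _ _ Hxy). rewrite polar_norm in HM by lra.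
    pose proof (Rabs_pos (u 0 0)).
    apply Rmult_le_reg_l with (mu r); auto. unfold Rdiv. rewrite <- Rmult_assoc, (Rmult_comm (mu r) M), Rmult_assoc, Rinv_r by lra. lra. }
  assert (Hcls : forall j, rsum (fun i => wr r (kkq q j i)) (S N) <= 2 * (M / mu r)).
  { intro j. apply (class_bound r (M / mu r) q j (S N) Hr Hq Hqb HMr). }
  assert (HrN : / 2 <= r ^ N).
  { pose proof (bern2 d N ltac:(lra)). unfold r. replace (INR N * d) with (/2) in H by (unfold d; field; lra). lra. }
  apply Rle_trans with (2 * rsum (wr r) (S N)).
  { rewrite <- rsum_sum, <- scal_sum_l. apply sum_Rle. intros k Hk.
    destruct (Nat.leb_spec (n k) N).
    - unfold wr, nb. pose proof (pos_INR (n k)). pose proof (sqrt_pos (ar (n k) ^ 2 + ai (n k) ^ 2)).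
      assert (r ^ N <= r ^ (n k)) by (apply pow_decr; [lra| auto]).
      assert (0 <= INR (n k) * sqrt (ar (n k) ^ 2 + ai (n k) ^ 2)) by nra. nra.
    - pose proof (wr_nonneg r k ltac:(lra)). lra. }
  apply Rle_trans with (2 * rsum (wr r) (q * S N)).
  { apply Rmult_le_compat_l; [lra|]. apply rsum_grow. intro; apply wr_nonneg; lra. nia. }
  rewrite rsum_classes.
  apply Rle_trans with (2 * rsum (fun _ => 2 * (M / mu r)) q).
  { apply Rmult_le_compat_l; [lra|]. apply rsum_le. intros j _. apply Hcls. }
  rewrite rsum_const.
  assert (Hq0 : 0 <= INR q) by apply pos_INR.
  replace (2 * (INR q * (2 * (M / mu r)))) with (4 * INR q * M / mu r) by (field; lra).
  unfold Rdiv. rewrite !Rmult_assoc. apply Rmult_le_compat_l; [lra|].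
  apply Rmult_le_compat_l; auto. apply Rmult_le_compat_l; auto.
  rewrite <- Rinv_mult. apply Rinv_le_contravar. nra. lra.
Qed.

Lemma suff_main (mu : R -> R) (B : R)
  (mu_pos : forall r, 0 <= r < 1 -> 0 < mu r)
  (mu_decr : forall r s, 0 <= r -> r <= s -> s < 1 -> mu s <= mu r)
  (B_pos : B > 0)
  (mu_doub : forall d, 0 < d <= 1 -> mu (1 - d / 2) >= B * mu (1 - d)) :
  (exists C : R, forall N : nat, (1 <= N)%nat ->
    sum_f_R0 (fun k => if Nat.leb (n k) N
                       then INR (n k) * sqrt (ar (n k) ^ 2 + ai (n k) ^ 2)
                       else 0) N
    <= C / mu (1 - 1 / INR N)) -> in_Bloch_mu mu u.
Proof.
  intros [C HC].
  destruct (suff_bound lam n ar ai mu B lam_gt1 n_pos n_gap mu_pos mu_decr B_pos mu_doub C HC) as [C' HC'].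
  apply (bloch_iff lam n ar ai u lam_gt1 n_pos n_gap conv_im u_def mu).
  exists (Rabs (u 0 0) + C'). intros x y Hxy.
  set (s := sqrt (x * x + y * y)).
  assert (Hs : 0 <= s < 1).
  { split. apply sqrt_pos. unfold s. rewrite <- sqrt_1. apply sqrt_lt_1_alt. split; [apply sq_nonneg2| lra]. }
  destruct (Dr_cv lam n ar ai u lam_gt1 n_pos n_gap conv_im u_def s Hs) as [lD HlD].
  pose proof (grad_bound lam n ar ai u lam_gt1 n_pos n_gap conv_im u_def x y lD Hxy HlD) as Hg.
  assert (HlD' : lD <= C' / mu s).
  { apply (le_lim_ev (fun K => sum_f_R0 (Dr n ar ai s) K) (fun _ => C' / mu s) lD _ 0); auto.
    apply cv_const. }
  assert (Hmu : 0 < mu s) by (apply mu_pos; auto).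
  assert (mu s * sqrt (G1 n ar ai x y * G1 n ar ai x y + G2 n ar ai x y * G2 n ar ai x y) <= C').
  { apply Rle_trans with (mu s * (C' / mu s)).
    - apply Rmult_le_compat_l; lra.
    - right. field. lra. }
  fold s. lra.
Qed.

End Nec.

Theorem corollary6
  (mu : R -> R) (B lam : R) (n : nat -> nat) (ar ai : nat -> R)
  (u : R -> R -> R)
  (* mu : [0,1) -> (0,oo), decreasing, continuous, mu(r) -> 0 as r -> 1- *)
  (mu_pos : forall r, 0 <= r < 1 -> 0 < mu r)
  (mu_decr : forall r s, 0 <= r -> r <= s -> s < 1 -> mu s <= mu r)
  (mu_cont : forall r, 0 <= r < 1 ->
     limit1_in mu (fun t => 0 <= t < 1) (mu r) r)
  (mu_lim : forall eps, eps > 0 -> exists delta, delta > 0 /\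
     forall r, 1 - delta < r < 1 -> Rabs (mu r) < eps)
  (* doubling-type condition *)
  (B_pos : B > 0)
  (mu_doub : forall d, 0 < d <= 1 -> mu (1 - d / 2) >= B * mu (1 - d))
  (* Hadamard gaps *)
  (lam_gt1 : lam > 1)
  (n_pos : (1 <= n 0)%nat)
  (n_gap : forall k, INR (n (S k)) >= lam * INR (n k))
  (* the series sum_k a_{n_k} z^{n_k} converges in D, u = its real part *)
  (conv_im : forall x y, x * x + y * y < 1 ->
     exists s, infinite_sum (fun k => im_term (ar (n k)) (ai (n k)) x y (n k)) s)
  (u_def : forall x y, x * x + y * y < 1 ->
     infinite_sum (fun k => re_term (ar (n k)) (ai (n k)) x y (n k)) (u x y)) :
  in_Bloch_mu mu u <->
  exists C : R, forall N : nat, (1 <= N)%nat ->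
    sum_f_R0 (fun k => if Nat.leb (n k) N
                       then INR (n k) * sqrt (ar (n k) ^ 2 + ai (n k) ^ 2)
                       else 0) N
    <= C / mu (1 - 1 / INR N).
Proof.
  split.
  - intro HB. exact (nec_main lam n ar ai u lam_gt1 n_pos n_gap conv_im u_def mu B mu_pos B_pos mu_doub HB).
  - intro HC. exact (suff_main lam n ar ai u lam_gt1 n_pos n_gap conv_im u_def mu B mu_pos mu_decr B_pos mu_doub HC).
Qed.
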